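(* Let $F$ be a field of characteristic different from $2$ and $3$. Then there exists a unital associative $F$-algebra $R$ such that the Lie algebra $[R]$ is $5$-Engel but the group of units $U(R)$ is not a $5$-Engel group. Moreover, such an $R$ can be chosen to be generated, as a unital $F$-algebra, by $2$ nilpotent elements.
   Context: For an associative algebra $R$, $[R]$ denotes the Lie algebra with the same underlying vector space and bracket $[a,b]=ab-ba$, and $U(R)$ denotes the group of units of $R$. Set $[x,{}_{(1)}y]=[x,y]$ and $[x,{}_{(k+1)}y]=[[x,{}_{(k)}y],y]$ for $k\ge 1$. A Lie algebra $L$ is $n$-Engel if $[u,{}_{(n)}v]=0$ for all $u,v\in L$. For a group, $(x,y)=(x,{}_{(1)}y)=x^{-1}y^{-1}xy$ and $(x,{}_{(k+1)}y)=((x,{}_{(k)}y),y)$; a group $G$ is $n$-Engel if $(u,{}_{(n)}v)=1$ for all $u,v\in G$. *)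

(* Defs.v *)
From HB Require Import structures.
From mathcomp Require Import all_boot all_order all_algebra.
Set Implicit Arguments. Unset Strict Implicit. Unset Printing Implicit Defensive.
Import GRing.Theory.
Local Open Scope ring_scope.

Definition lie_br (R : pzRingType) (a b : R) : R := a * b - b * a.

Fixpoint lie_iter (R : pzRingType) (x y : R) (k : nat) : R :=
  match k with 0 => x | k'.+1 => lie_br (lie_iter x y k') y end.

Definition lie_engel (R : pzRingType) (n : nat) : Prop :=
  forall u v : R, lie_iter u v n = 0.

Definition is_inverse_pair (R : pzRingType) (a a' : R) : Prop :=
  a * a' = 1 /\ a' * a = 1.

(* Iterated group commutator (x, _(k) y) in U(R), carried as a pair
   (element, its inverse).  With x = a (inverse a'), y = b (inverse b'):
   (c, y) = c^-1 y^-1 c y, whose inverse is y^-1 c^-1 y c. *)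
Fixpoint gcomm_iter (R : pzRingType) (a a' b b' : R) (k : nat) : R * R :=
  match k with
  | 0 => (a, a')
  | k'.+1 => let: (c, c') := gcomm_iter a a' b b' k' in
             (c' * b' * c * b, b' * c' * b * c)
  end.

Definition units_engel (R : pzRingType) (n : nat) : Prop :=
  forall a a' b b' : R, is_inverse_pair a a' -> is_inverse_pair b b' ->
    (gcomm_iter a a' b b' n).1 = 1.

Definition nilp (R : pzRingType) (x : R) : Prop := exists m : nat, x ^+ m = 0.

Definition in_subalg_gen2 (F : pzRingType) (A : algType F) (x y r : A) : Prop :=
  forall S : A -> Prop,
    S 1 -> S x -> S y ->
    (forall u v, S u -> S v -> S (u + v)) ->
    (forall (c : F) u, S u -> S (c *: u)) ->
    (forall u v, S u -> S v -> S (u * v)) ->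
    S r.

Definition gen_by_2_nilpotents (F : pzRingType) (A : algType F) : Prop :=
  exists x y : A, nilp x /\ nilp y /\ forall r : A, in_subalg_gen2 x y r.

(* Main.v *)
Require Import Defs.
From HB Require Import structures.
From mathcomp Require Import all_boot all_order all_algebra.
From mathcomp Require Import ring.
Set Implicit Arguments. Unset Strict Implicit. Unset Printing Implicit Defensive.
Import GRing.Theory.
Local Open Scope ring_scope.

Definition cc (F : fieldType) (u : 'rV[F]_24) (i : nat) : F := u ord0 (inord i).
Definition mkrow (F : fieldType) (f : nat -> F) : 'rV[F]_24 := \row_(k < 24) f k.
Arguments cc : simpl never.
Arguments mkrow : simpl never.

Lemma ccE (F : fieldType) (f : nat -> F) i : (i < 24)%N -> cc (mkrow f) i = f i.
Proof. by move=> hi; rewrite /cc /mkrow mxE inordK. Qed.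

Lemma rowext (F : fieldType) (u v : 'rV[F]_24) :
  (forall i, (i < 24)%N -> cc u i = cc v i) -> u = v.
Proof.
move=> H; apply/rowP => k; have := H k (ltn_ord k).
by rewrite /cc inord_val; rewrite (ord1 ord0).
Qed.

Lemma all24 (P : nat -> Prop) : P 0 -> P 1 -> P 2 -> P 3 -> P 4 -> P 5 -> P 6 -> P 7 -> P 8 -> P 9 -> P 10 -> P 11 -> P 12 -> P 13 -> P 14 -> P 15 -> P 16 -> P 17 -> P 18 -> P 19 -> P 20 -> P 21 -> P 22 -> P 23 ->
  forall i, (i < 24)%N -> P i.
Proof.
move=> H0 H1 H2 H3 H4 H5 H6 H7 H8 H9 H10 H11 H12 H13 H14 H15 H16 H17 H18 H19 H20 H21 H22 H23 i.
case: i => [|i]; first by [].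
case: i => [|i]; first by [].
case: i => [|i]; first by [].
case: i => [|i]; first by [].
case: i => [|i]; first by [].
case: i => [|i]; first by [].
case: i => [|i]; first by [].
case: i => [|i]; first by [].
case: i => [|i]; first by [].
case: i => [|i]; first by [].
case: i => [|i]; first by [].
case: i => [|i]; first by [].
case: i => [|i]; first by [].
case: i => [|i]; first by [].
case: i => [|i]; first by [].
case: i => [|i]; first by [].
case: i => [|i]; first by [].
case: i => [|i]; first by [].
case: i => [|i]; first by [].
case: i => [|i]; first by [].
case: i => [|i]; first by [].
case: i => [|i]; first by [].
case: i => [|i]; first by [].
case: i => [|i]; first by [].
by [].
Qed.

Lemma ccD (F : fieldType) (u v : 'rV[F]_24) i : cc (u + v) i = cc u i + cc v i.
Proof. by rewrite /cc mxE. Qed.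
Lemma ccN (F : fieldType) (u : 'rV[F]_24) i : cc (- u) i = - cc u i.
Proof. by rewrite /cc mxE. Qed.
Lemma ccB (F : fieldType) (u v : 'rV[F]_24) i : cc (u - v) i = cc u i - cc v i.
Proof. by rewrite ccD ccN. Qed.
Lemma ccZ (F : fieldType) (a : F) (u : 'rV[F]_24) i : cc (a *: u) i = a * cc u i.
Proof. by rewrite /cc mxE. Qed.
Lemma cc0 (F : fieldType) i : cc (0 : 'rV[F]_24) i = 0.
Proof. by rewrite /cc mxE. Qed.

Definition mcoef (F : fieldType) (k : nat) (u v : 'rV[F]_24) : F := match k with
  | 0 => cc u 0 * cc v 0
  | 1 => cc u 0 * cc v 1 + cc u 1 * cc v 0
  | 2 => cc u 0 * cc v 2 + cc u 1 * cc v 1 + cc u 2 * cc v 0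
  | 3 => cc u 0 * cc v 3 + cc u 1 * cc v 2 + cc u 2 * cc v 1 + cc u 3 * cc v 0
  | 4 => cc u 0 * cc v 4 + cc u 1 * cc v 3 + cc u 2 * cc v 2 + cc u 3 * cc v 1 + cc u 4 * cc v 0
  | 5 => cc u 0 * cc v 5 + cc u 5 * cc v 0
  | 6 => cc u 0 * cc v 6 + cc u 5 * cc v 1 + cc u 6 * cc v 0
  | 7 => cc u 0 * cc v 7 + cc u 1 * cc v 5 + cc u 7 * cc v 0
  | 8 => cc u 0 * cc v 8 + cc u 5 * cc v 2 + cc u 6 * cc v 1 + cc u 8 * cc v 0
  | 9 => cc u 0 * cc v 9 + cc u 1 * cc v 6 + cc u 7 * cc v 1 + cc u 9 * cc v 0
  | 10 => cc u 0 * cc v 10 + cc u 1 * cc v 7 + cc u 2 * cc v 5 + cc u 10 * cc v 0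
  | 11 => cc u 0 * cc v 11 + cc u 5 * cc v 3 + cc u 6 * cc v 2 + cc u 8 * cc v 1 + cc u 11 * cc v 0
  | 12 => cc u 0 * cc v 12 + cc u 1 * cc v 8 + cc u 7 * cc v 2 + cc u 9 * cc v 1 + cc u 12 * cc v 0
  | 13 => cc u 0 * cc v 13 + cc u 1 * cc v 9 + cc u 2 * cc v 6 + cc u 10 * cc v 1 + cc u 13 * cc v 0
  | 14 => cc u 0 * cc v 14 + cc u 1 * cc v 10 + cc u 2 * cc v 7 + cc u 3 * cc v 5 + cc u 14 * cc v 0
  | 15 => cc u 0 * cc v 15 + cc u 5 * cc v 4 + cc u 6 * cc v 3 + cc u 8 * cc v 2 + cc u 11 * cc v 1 + cc u 15 * cc v 0
  | 16 => cc u 0 * cc v 16 + 12 * (cc u 1 * cc v 11) + (-16) * (cc u 1 * cc v 13) + (-5) * (cc u 1 * cc v 14) + (-16) * (cc u 2 * cc v 9) + (-5) * (cc u 2 * cc v 10) + (-16) * (cc u 3 * cc v 6) + (-5) * (cc u 3 * cc v 7) + (-5) * (cc u 4 * cc v 5) + 12 * (cc u 7 * cc v 3) + 12 * (cc u 9 * cc v 2) + 12 * (cc u 12 * cc v 1) + (-16) * (cc u 14 * cc v 1) + cc u 16 * cc v 0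
  | 17 => cc u 0 * cc v 17 + 4 * (cc u 1 * cc v 12) + 4 * (cc u 1 * cc v 13) + (-5) * (cc u 1 * cc v 14) + 4 * (cc u 2 * cc v 8) + 4 * (cc u 2 * cc v 9) + (-5) * (cc u 2 * cc v 10) + 4 * (cc u 3 * cc v 6) + (-5) * (cc u 3 * cc v 7) + (-5) * (cc u 4 * cc v 5) + 4 * (cc u 10 * cc v 2) + 4 * (cc u 13 * cc v 1) + 4 * (cc u 14 * cc v 1) + cc u 17 * cc v 0
  | 18 => cc u 0 * cc v 18 + 12 * (cc u 1 * cc v 15) + cc u 1 * cc v 16 + (-1) * (cc u 1 * cc v 17) + 12 * (cc u 2 * cc v 11) + (-4) * (cc u 2 * cc v 12) + (-20) * (cc u 2 * cc v 13) + (-4) * (cc u 3 * cc v 8) + (-20) * (cc u 3 * cc v 9) + (-20) * (cc u 4 * cc v 6) + 12 * (cc u 7 * cc v 4) + 12 * (cc u 9 * cc v 3) + 12 * (cc u 10 * cc v 3) + 12 * (cc u 12 * cc v 2) + 12 * (cc u 13 * cc v 2) + (-4) * (cc u 14 * cc v 2) + cc u 16 * cc v 1 + 3 * (cc u 17 * cc v 1) + cc u 18 * cc v 0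
  | 19 => cc u 0 * cc v 19 + cc u 5 * cc v 7 + cc u 6 * cc v 5 + cc u 19 * cc v 0
  | 20 => cc u 0 * cc v 20 + cc u 5 * cc v 9 + cc u 5 * cc v 10 + cc u 6 * cc v 6 + cc u 6 * cc v 7 + cc u 8 * cc v 5 + cc u 19 * cc v 1 + cc u 20 * cc v 0
  | 21 => cc u 0 * cc v 21 + 3 * (cc u 5 * cc v 12) + 3 * (cc u 5 * cc v 13) + (-1) * (cc u 5 * cc v 14) + 3 * (cc u 6 * cc v 8) + 3 * (cc u 6 * cc v 9) + (-1) * (cc u 6 * cc v 10) + 3 * (cc u 8 * cc v 6) + (-1) * (cc u 8 * cc v 7) + (-1) * (cc u 11 * cc v 5) + 3 * (cc u 19 * cc v 2) + 3 * (cc u 20 * cc v 1) + cc u 21 * cc v 0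
  | 22 => cc u 0 * cc v 22 + cc u 5 * cc v 16 + 3 * (cc u 5 * cc v 17) + 12 * (cc u 6 * cc v 11) + 12 * (cc u 6 * cc v 12) + (-4) * (cc u 6 * cc v 13) + (-20) * (cc u 6 * cc v 14) + 12 * (cc u 8 * cc v 8) + (-4) * (cc u 8 * cc v 9) + (-20) * (cc u 8 * cc v 10) + (-4) * (cc u 11 * cc v 6) + (-20) * (cc u 11 * cc v 7) + (-20) * (cc u 15 * cc v 5) + 12 * (cc u 19 * cc v 3) + 12 * (cc u 20 * cc v 2) + 4 * (cc u 21 * cc v 1) + cc u 22 * cc v 0
  | 23 => cc u 0 * cc v 23 + cc u 5 * cc v 18 + 12 * (cc u 6 * cc v 15) + cc u 6 * cc v 16 + (-1) * (cc u 6 * cc v 17) + 12 * (cc u 8 * cc v 11) + (-4) * (cc u 8 * cc v 12) + (-20) * (cc u 8 * cc v 13) + (-4) * (cc u 11 * cc v 8) + (-20) * (cc u 11 * cc v 9) + (-20) * (cc u 15 * cc v 6) + 12 * (cc u 19 * cc v 4) + 12 * (cc u 20 * cc v 3) + 4 * (cc u 21 * cc v 2) + cc u 22 * cc v 1 + cc u 23 * cc v 0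
  | _ => 0 end.

Fact mulRt_key : unit. Proof. exact: tt. Qed.
Definition mulRt (F : fieldType) : 'rV[F]_24 -> 'rV[F]_24 -> 'rV[F]_24 :=
  locked_with mulRt_key (fun u v => mkrow (fun k => mcoef k u v)).
Definition oneRt (F : fieldType) : 'rV[F]_24 := mkrow (fun k => if k is 0 then 1 else 0).

Lemma ccMr (F : fieldType) (u v : 'rV[F]_24) i : (i < 24)%N -> cc (mulRt u v) i = mcoef i u v.
Proof. by move=> hi; rewrite /mulRt unlock ccE. Qed.

Ltac crunch := apply: rowext; apply: all24;
  rewrite ?ccD ?ccZ ?ccMr ?ccE //=; rewrite ?ccD ?ccZ ?ccMr ?ccE //=; rewrite ?ccD ?ccZ ?ccE //=; ring.

Lemma mulRtA (F : fieldType) : associative (@mulRt F).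
Proof. move=> u v w; crunch. Qed.
Lemma mul1Rt (F : fieldType) : left_id (@oneRt F) (@mulRt F).
Proof. move=> u; crunch. Qed.
Lemma mulRt1 (F : fieldType) : right_id (@oneRt F) (@mulRt F).
Proof. move=> u; crunch. Qed.
Lemma mulRtDl (F : fieldType) : left_distributive (@mulRt F) +%R.
Proof. move=> u v w; crunch. Qed.
Lemma mulRtDr (F : fieldType) : right_distributive (@mulRt F) +%R.
Proof. move=> u v w; crunch. Qed.
Lemma oneRt_neq0 (F : fieldType) : @oneRt F != 0.
Proof.
apply/eqP => /(congr1 (fun M => cc M 0)); rewrite ccE // cc0 /=.
by move/eqP; rewrite oner_eq0.
Qed.
Lemma scaleRtAl (F : fieldType) (a : F) (u v : 'rV[F]_24) : a *: mulRt u v = mulRt (a *: u) v.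
Proof. crunch. Qed.
Lemma scaleRtAr (F : fieldType) (a : F) (u v : 'rV[F]_24) : a *: mulRt u v = mulRt u (a *: v).
Proof. crunch. Qed.

Definition Rt (F : fieldType) : Type := 'rV[F]_24.
HB.instance Definition _ (F : fieldType) := GRing.Lmodule.on (Rt F).
HB.instance Definition _ (F : fieldType) :=
  GRing.Zmodule_isNzRing.Build (Rt F) (@mulRtA F) (@mul1Rt F) (@mulRt1 F)
    (@mulRtDl F) (@mulRtDr F) (@oneRt_neq0 F).
HB.instance Definition _ (F : fieldType) :=
  GRing.Lmodule_isLalgebra.Build F (Rt F) (@scaleRtAl F).
HB.instance Definition _ (F : fieldType) :=
  GRing.Lalgebra_isAlgebra.Build F (Rt F) (@scaleRtAr F).

Lemma ccM (F : fieldType) (u v : Rt F) i : (i < 24)%N -> cc (u * v) i = mcoef i u v.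
Proof. exact: ccMr. Qed.
Lemma cc1 (F : fieldType) i : (i < 24)%N -> cc (1 : Rt F) i = if i is 0 then 1 else 0.
Proof. exact: ccE. Qed.

Ltac crunch2 := apply: rowext; apply: all24;
  rewrite ?ccB ?ccD ?ccZ ?ccM ?cc0 //=.
Definition W1c (F : fieldType) (u v : 'rV[F]_24) (k : nat) : F := match k with
  | 6 => (-1) * cc u 1 * cc v 5 + cc u 5 * cc v 1
  | 7 => cc u 1 * cc v 5 + (-1) * cc u 5 * cc v 1
  | 8 => (-1) * cc u 1 * cc v 6 + (-1) * cc u 2 * cc v 5 + cc u 5 * cc v 2 + cc u 6 * cc v 1
  | 9 => cc u 1 * cc v 6 + (-1) * cc u 1 * cc v 7 + (-1) * cc u 6 * cc v 1 + cc u 7 * cc v 1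
  | 10 => cc u 1 * cc v 7 + cc u 2 * cc v 5 + (-1) * cc u 5 * cc v 2 + (-1) * cc u 7 * cc v 1
  | 11 => (-1) * cc u 1 * cc v 8 + (-1) * cc u 2 * cc v 6 + (-1) * cc u 3 * cc v 5 + cc u 5 * cc v 3 + cc u 6 * cc v 2 + cc u 8 * cc v 1
  | 12 => cc u 1 * cc v 8 + (-1) * cc u 1 * cc v 9 + (-1) * cc u 2 * cc v 7 + cc u 7 * cc v 2 + (-1) * cc u 8 * cc v 1 + cc u 9 * cc v 1
  | 13 => cc u 1 * cc v 9 + (-1) * cc u 1 * cc v 10 + cc u 2 * cc v 6 + (-1) * cc u 6 * cc v 2 + (-1) * cc u 9 * cc v 1 + cc u 10 * cc v 1
  | 14 => cc u 1 * cc v 10 + cc u 2 * cc v 7 + cc u 3 * cc v 5 + (-1) * cc u 5 * cc v 3 + (-1) * cc u 7 * cc v 2 + (-1) * cc u 10 * cc v 1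
  | 15 => (-1) * cc u 1 * cc v 11 + (-1) * cc u 2 * cc v 8 + (-1) * cc u 3 * cc v 6 + (-1) * cc u 4 * cc v 5 + cc u 5 * cc v 4 + cc u 6 * cc v 3 + cc u 8 * cc v 2 + cc u 11 * cc v 1
  | 16 => 12 * cc u 1 * cc v 11 + (-12) * cc u 1 * cc v 12 + (-16) * cc u 1 * cc v 13 + 11 * cc u 1 * cc v 14 + (-28) * cc u 2 * cc v 9 + (-5) * cc u 2 * cc v 10 + (-16) * cc u 3 * cc v 6 + (-17) * cc u 3 * cc v 7 + (-5) * cc u 4 * cc v 5 + 5 * cc u 5 * cc v 4 + 16 * cc u 6 * cc v 3 + 17 * cc u 7 * cc v 3 + 28 * cc u 9 * cc v 2 + 5 * cc u 10 * cc v 2 + (-12) * cc u 11 * cc v 1 + 12 * cc u 12 * cc v 1 + 16 * cc u 13 * cc v 1 + (-11) * cc u 14 * cc v 1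
  | 17 => 4 * cc u 1 * cc v 12 + (-9) * cc u 1 * cc v 14 + 4 * cc u 2 * cc v 8 + 4 * cc u 2 * cc v 9 + (-9) * cc u 2 * cc v 10 + 4 * cc u 3 * cc v 6 + (-5) * cc u 3 * cc v 7 + (-5) * cc u 4 * cc v 5 + 5 * cc u 5 * cc v 4 + (-4) * cc u 6 * cc v 3 + 5 * cc u 7 * cc v 3 + (-4) * cc u 8 * cc v 2 + (-4) * cc u 9 * cc v 2 + 9 * cc u 10 * cc v 2 + (-4) * cc u 12 * cc v 1 + 9 * cc u 14 * cc v 1
  | 18 => 12 * cc u 1 * cc v 15 + (-4) * cc u 1 * cc v 17 + 12 * cc u 2 * cc v 11 + (-16) * cc u 2 * cc v 12 + (-32) * cc u 2 * cc v 13 + 4 * cc u 2 * cc v 14 + (-4) * cc u 3 * cc v 8 + (-32) * cc u 3 * cc v 9 + (-12) * cc u 3 * cc v 10 + (-20) * cc u 4 * cc v 6 + (-12) * cc u 4 * cc v 7 + 20 * cc u 6 * cc v 4 + 12 * cc u 7 * cc v 4 + 4 * cc u 8 * cc v 3 + 32 * cc u 9 * cc v 3 + 12 * cc u 10 * cc v 3 + (-12) * cc u 11 * cc v 2 + 16 * cc u 12 * cc v 2 + 32 * cc u 13 * cc v 2 + (-4) * cc u 14 * cc v 2 + (-12) * cc u 15 * cc v 1 + 4 * cc u 17 * cc v 1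
  | 19 => (-1) * cc u 5 * cc v 6 + cc u 5 * cc v 7 + cc u 6 * cc v 5 + (-1) * cc u 7 * cc v 5
  | 20 => (-1) * cc u 1 * cc v 19 + (-1) * cc u 5 * cc v 8 + cc u 5 * cc v 9 + cc u 5 * cc v 10 + cc u 6 * cc v 7 + (-1) * cc u 7 * cc v 6 + cc u 8 * cc v 5 + (-1) * cc u 9 * cc v 5 + (-1) * cc u 10 * cc v 5 + cc u 19 * cc v 1
  | 21 => (-3) * cc u 1 * cc v 20 + (-3) * cc u 2 * cc v 19 + cc u 5 * cc v 11 + 3 * cc u 5 * cc v 12 + 3 * cc u 5 * cc v 13 + (-1) * cc u 5 * cc v 14 + 3 * cc u 6 * cc v 9 + (-1) * cc u 6 * cc v 10 + cc u 7 * cc v 8 + (-1) * cc u 8 * cc v 7 + (-3) * cc u 9 * cc v 6 + cc u 10 * cc v 6 + (-1) * cc u 11 * cc v 5 + (-3) * cc u 12 * cc v 5 + (-3) * cc u 13 * cc v 5 + cc u 14 * cc v 5 + 3 * cc u 19 * cc v 2 + 3 * cc u 20 * cc v 1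
  | 22 => (-4) * cc u 1 * cc v 21 + (-12) * cc u 2 * cc v 20 + (-12) * cc u 3 * cc v 19 + 20 * cc u 5 * cc v 15 + cc u 5 * cc v 16 + 3 * cc u 5 * cc v 17 + 16 * cc u 6 * cc v 11 + 12 * cc u 6 * cc v 12 + (-4) * cc u 6 * cc v 13 + (-20) * cc u 6 * cc v 14 + 20 * cc u 7 * cc v 11 + (-4) * cc u 8 * cc v 9 + (-20) * cc u 8 * cc v 10 + 4 * cc u 9 * cc v 8 + 20 * cc u 10 * cc v 8 + (-16) * cc u 11 * cc v 6 + (-20) * cc u 11 * cc v 7 + (-12) * cc u 12 * cc v 6 + 4 * cc u 13 * cc v 6 + 20 * cc u 14 * cc v 6 + (-20) * cc u 15 * cc v 5 + (-1) * cc u 16 * cc v 5 + (-3) * cc u 17 * cc v 5 + 12 * cc u 19 * cc v 3 + 12 * cc u 20 * cc v 2 + 4 * cc u 21 * cc v 1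
  | 23 => (-1) * cc u 1 * cc v 22 + (-4) * cc u 2 * cc v 21 + (-12) * cc u 3 * cc v 20 + (-12) * cc u 4 * cc v 19 + cc u 5 * cc v 18 + 32 * cc u 6 * cc v 15 + cc u 6 * cc v 16 + (-1) * cc u 6 * cc v 17 + 16 * cc u 8 * cc v 11 + (-4) * cc u 8 * cc v 12 + (-20) * cc u 8 * cc v 13 + 20 * cc u 9 * cc v 11 + (-16) * cc u 11 * cc v 8 + (-20) * cc u 11 * cc v 9 + 4 * cc u 12 * cc v 8 + 20 * cc u 13 * cc v 8 + (-32) * cc u 15 * cc v 6 + (-1) * cc u 16 * cc v 6 + cc u 17 * cc v 6 + (-1) * cc u 18 * cc v 5 + 12 * cc u 19 * cc v 4 + 12 * cc u 20 * cc v 3 + 4 * cc u 21 * cc v 2 + cc u 22 * cc v 1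
  | _ => 0 end.
Fact W1_key : unit. Proof. exact: tt. Qed.
Definition W1 (F : fieldType) (u v : 'rV[F]_24) : 'rV[F]_24 := locked_with W1_key (mkrow (fun k => W1c u v k)).
Lemma W1E (F : fieldType) (u v : 'rV[F]_24) k : (k < 24)%N -> cc (W1 u v) k = W1c u v k.
Proof. by move=> hk; rewrite /W1 unlock ccE. Qed.
Definition W2c (F : fieldType) (u v : 'rV[F]_24) (k : nat) : F := match k with
  | 8 => (-1) * cc u 1 * cc v 1 * cc v 5 + cc u 5 * cc v 1 * cc v 1
  | 9 => 2 * cc u 1 * cc v 1 * cc v 5 + (-2) * cc u 5 * cc v 1 * cc v 1
  | 10 => (-1) * cc u 1 * cc v 1 * cc v 5 + cc u 5 * cc v 1 * cc v 1
  | 11 => (-1) * cc u 1 * cc v 1 * cc v 6 + (-1) * cc u 1 * cc v 2 * cc v 5 + (-1) * cc u 2 * cc v 1 * cc v 5 + 2 * cc u 5 * cc v 1 * cc v 2 + cc u 6 * cc v 1 * cc v 1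
  | 12 => 2 * cc u 1 * cc v 1 * cc v 6 + (-1) * cc u 1 * cc v 1 * cc v 7 + cc u 1 * cc v 2 * cc v 5 + cc u 2 * cc v 1 * cc v 5 + (-2) * cc u 5 * cc v 1 * cc v 2 + (-2) * cc u 6 * cc v 1 * cc v 1 + cc u 7 * cc v 1 * cc v 1
  | 13 => (-1) * cc u 1 * cc v 1 * cc v 6 + 2 * cc u 1 * cc v 1 * cc v 7 + cc u 1 * cc v 2 * cc v 5 + cc u 2 * cc v 1 * cc v 5 + (-2) * cc u 5 * cc v 1 * cc v 2 + cc u 6 * cc v 1 * cc v 1 + (-2) * cc u 7 * cc v 1 * cc v 1
  | 14 => (-1) * cc u 1 * cc v 1 * cc v 7 + (-1) * cc u 1 * cc v 2 * cc v 5 + (-1) * cc u 2 * cc v 1 * cc v 5 + 2 * cc u 5 * cc v 1 * cc v 2 + cc u 7 * cc v 1 * cc v 1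
  | 15 => (-1) * cc u 1 * cc v 1 * cc v 8 + (-1) * cc u 1 * cc v 2 * cc v 6 + (-1) * cc u 1 * cc v 3 * cc v 5 + (-1) * cc u 2 * cc v 1 * cc v 6 + (-1) * cc u 2 * cc v 2 * cc v 5 + (-1) * cc u 3 * cc v 1 * cc v 5 + 2 * cc u 5 * cc v 1 * cc v 3 + cc u 5 * cc v 2 * cc v 2 + 2 * cc u 6 * cc v 1 * cc v 2 + cc u 8 * cc v 1 * cc v 1
  | 16 => 24 * cc u 1 * cc v 1 * cc v 8 + 4 * cc u 1 * cc v 1 * cc v 9 + (-27) * cc u 1 * cc v 1 * cc v 10 + 28 * cc u 1 * cc v 2 * cc v 6 + (-23) * cc u 1 * cc v 2 * cc v 7 + cc u 1 * cc v 3 * cc v 5 + 28 * cc u 2 * cc v 1 * cc v 6 + (-23) * cc u 2 * cc v 1 * cc v 7 + 5 * cc u 2 * cc v 2 * cc v 5 + cc u 3 * cc v 1 * cc v 5 + (-2) * cc u 5 * cc v 1 * cc v 3 + (-5) * cc u 5 * cc v 2 * cc v 2 + (-56) * cc u 6 * cc v 1 * cc v 2 + 46 * cc u 7 * cc v 1 * cc v 2 + (-24) * cc u 8 * cc v 1 * cc v 1 + (-4) * cc u 9 * cc v 1 * cc v 1 + 27 * cc u 10 * cc v 1 * cc v 1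
  | 17 => (-4) * cc u 1 * cc v 1 * cc v 8 + 4 * cc u 1 * cc v 1 * cc v 9 + 9 * cc u 1 * cc v 1 * cc v 10 + 13 * cc u 1 * cc v 2 * cc v 7 + 9 * cc u 1 * cc v 3 * cc v 5 + 13 * cc u 2 * cc v 1 * cc v 7 + 13 * cc u 2 * cc v 2 * cc v 5 + 9 * cc u 3 * cc v 1 * cc v 5 + (-18) * cc u 5 * cc v 1 * cc v 3 + (-13) * cc u 5 * cc v 2 * cc v 2 + (-26) * cc u 7 * cc v 1 * cc v 2 + 4 * cc u 8 * cc v 1 * cc v 1 + (-4) * cc u 9 * cc v 1 * cc v 1 + (-9) * cc u 10 * cc v 1 * cc v 1
  | 18 => 12 * cc u 1 * cc v 1 * cc v 11 + 16 * cc u 1 * cc v 1 * cc v 12 + (-36) * cc u 1 * cc v 1 * cc v 14 + 28 * cc u 1 * cc v 2 * cc v 8 + 16 * cc u 1 * cc v 2 * cc v 9 + (-36) * cc u 1 * cc v 2 * cc v 10 + 28 * cc u 1 * cc v 3 * cc v 6 + (-20) * cc u 1 * cc v 3 * cc v 7 + (-8) * cc u 1 * cc v 4 * cc v 5 + 28 * cc u 2 * cc v 1 * cc v 8 + 16 * cc u 2 * cc v 1 * cc v 9 + (-36) * cc u 2 * cc v 1 * cc v 10 + 44 * cc u 2 * cc v 2 * cc v 6 + (-20) * cc u 2 * cc v 2 * cc v 7 + 8 * cc u 2 * cc v 3 * cc v 5 + 28 * cc u 3 * cc v 1 * cc v 6 + (-20) * cc u 3 * cc v 1 * cc v 7 +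 8 * cc u 3 * cc v 2 * cc v 5 + (-8) * cc u 4 * cc v 1 * cc v 5 + 16 * cc u 5 * cc v 1 * cc v 4 + (-16) * cc u 5 * cc v 2 * cc v 3 + (-56) * cc u 6 * cc v 1 * cc v 3 + (-44) * cc u 6 * cc v 2 * cc v 2 + 40 * cc u 7 * cc v 1 * cc v 3 + 20 * cc u 7 * cc v 2 * cc v 2 + (-56) * cc u 8 * cc v 1 * cc v 2 + (-32) * cc u 9 * cc v 1 * cc v 2 + 72 * cc u 10 * cc v 1 * cc v 2 + (-12) * cc u 11 * cc v 1 * cc v 1 + (-16) * cc u 12 * cc v 1 * cc v 1 + 36 * cc u 14 * cc v 1 * cc v 1
  | 19 => (-2) * cc u 1 * cc v 5 * cc v 5 + 2 * cc u 5 * cc v 1 * cc v 5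
  | 20 => (-3) * cc u 1 * cc v 5 * cc v 6 + (-1) * cc u 1 * cc v 5 * cc v 7 + (-2) * cc u 2 * cc v 5 * cc v 5 + 2 * cc u 5 * cc v 1 * cc v 7 + 2 * cc u 5 * cc v 2 * cc v 5 + 3 * cc u 6 * cc v 1 * cc v 5 + (-1) * cc u 7 * cc v 1 * cc v 5
  | 21 => (-3) * cc u 1 * cc v 1 * cc v 19 + (-1) * cc u 1 * cc v 5 * cc v 8 + (-3) * cc u 1 * cc v 5 * cc v 9 + 5 * cc u 1 * cc v 5 * cc v 10 + (-3) * cc u 1 * cc v 6 * cc v 6 + 5 * cc u 1 * cc v 6 * cc v 7 + (-1) * cc u 2 * cc v 5 * cc v 6 + 5 * cc u 2 * cc v 5 * cc v 7 + 2 * cc u 3 * cc v 5 * cc v 5 + (-4) * cc u 5 * cc v 1 * cc v 8 + 6 * cc u 5 * cc v 1 * cc v 9 + 2 * cc u 5 * cc v 1 * cc v 10 + (-4) * cc u 5 * cc v 2 * cc v 6 + 2 * cc u 5 * cc v 2 * cc v 7 + (-2) * cc u 5 * cc v 3 * cc v 5 + 3 * cc u 6 * cc v 1 * cc v 6 + 2 * cc u 6 * cc v 1 * cc v 7 + 5 * cc u 6 * cc v 2 * cc v 5 + (-7) * cc u 7 * cc v 1 * cc v 6 + (-7) * cc u 7 * cc v 2 * cc v 5 + 5 * cc u 8 * cc v 1 * cc v 5 + (-3) * cc u 9 * cc v 1 * cc v 5 + (-7) * cc u 10 * cc v 1 * cc v 5 + 3 * cc u 19 * cc v 1 * cc v 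1
  | 22 => (-12) * cc u 1 * cc v 1 * cc v 20 + (-12) * cc u 1 * cc v 2 * cc v 19 + 12 * cc u 1 * cc v 5 * cc v 11 + (-12) * cc u 1 * cc v 5 * cc v 12 + 20 * cc u 1 * cc v 5 * cc v 13 + 36 * cc u 1 * cc v 5 * cc v 14 + 8 * cc u 1 * cc v 6 * cc v 8 + 20 * cc u 1 * cc v 6 * cc v 9 + 36 * cc u 1 * cc v 6 * cc v 10 + 36 * cc u 1 * cc v 7 * cc v 8 + (-12) * cc u 2 * cc v 1 * cc v 19 + 28 * cc u 2 * cc v 5 * cc v 8 + 20 * cc u 2 * cc v 5 * cc v 9 + 52 * cc u 2 * cc v 5 * cc v 10 + 20 * cc u 2 * cc v 6 * cc v 6 + 52 * cc u 2 * cc v 6 * cc v 7 + 60 * cc u 3 * cc v 5 * cc v 6 + 52 * cc u 3 * cc v 5 * cc v 7 + 40 * cc u 4 * cc v 5 * cc v 5 + 24 * cc u 5 * cc v 1 * cc v 12 + 8 * cc u 5 * cc v 1 * cc v 13 + (-24) * cc u 5 * cc v 1 * cc v 14 + (-32) * cc u 5 * cc v 2 * cc v 8 + 8 * cc u 5 * cc v 2 * cc v 9 + (-8) * cc u 5 * cc v 2 * cc v 10 + (-48) * cc u 5 * cc v 3 * cc v 6 + (-8) * cc u 5 * cc v 3 * cc v 7 + (-40) * cc u 5 * cc v 4 * cc v 5 + (-4) * cc u 6 * cc v 1 * cc v 8 + 8 * cc u 6 * cc v 1 * cc v 9 + (-24) * cc u 6 * cc v 1 * cc v 10 + (-20) *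 cc u 6 * cc v 2 * cc v 6 + (-8) * cc u 6 * cc v 2 * cc v 7 + (-12) * cc u 6 * cc v 3 * cc v 5 + (-12) * cc u 7 * cc v 1 * cc v 8 + (-44) * cc u 7 * cc v 2 * cc v 6 + (-44) * cc u 7 * cc v 3 * cc v 5 + (-4) * cc u 8 * cc v 1 * cc v 6 + (-24) * cc u 8 * cc v 1 * cc v 7 + 4 * cc u 8 * cc v 2 * cc v 5 + (-28) * cc u 9 * cc v 1 * cc v 6 + (-28) * cc u 9 * cc v 2 * cc v 5 + (-12) * cc u 10 * cc v 1 * cc v 6 + (-44) * cc u 10 * cc v 2 * cc v 5 + (-12) * cc u 11 * cc v 1 * cc v 5 + (-12) * cc u 12 * cc v 1 * cc v 5 + (-28) * cc u 13 * cc v 1 * cc v 5 + (-12) * cc u 14 * cc v 1 * cc v 5 + 24 * cc u 19 * cc v 1 * cc v 2 + 12 * cc u 20 * cc v 1 * cc v 1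
  | 23 => (-4) * cc u 1 * cc v 1 * cc v 21 + (-12) * cc u 1 * cc v 2 * cc v 20 + (-12) * cc u 1 * cc v 3 * cc v 19 + (-44) * cc u 1 * cc v 5 * cc v 15 + (-1) * cc u 1 * cc v 5 * cc v 16 + 5 * cc u 1 * cc v 5 * cc v 17 + 24 * cc u 1 * cc v 6 * cc v 11 + 20 * cc u 1 * cc v 6 * cc v 12 + 36 * cc u 1 * cc v 6 * cc v 13 + (-20) * cc u 1 * cc v 6 * cc v 14 + (-20) * cc u 1 * cc v 7 * cc v 11 + 20 * cc u 1 * cc v 8 * cc v 8 + 36 * cc u 1 * cc v 8 * cc v 9 + (-20) * cc u 1 * cc v 8 * cc v 10 + (-12) * cc u 2 * cc v 1 * cc v 20 + (-12) * cc u 2 * cc v 2 * cc v 19 + (-28) * cc u 2 * cc v 5 * cc v 11 + 20 * cc u 2 * cc v 5 * cc v 12 + 52 * cc u 2 * cc v 5 * cc v 13 + (-4) * cc u 2 * cc v 5 * cc v 14 + 72 * cc u 2 * cc v 6 * cc v 8 + 52 * cc u 2 * cc v 6 * cc v 9 + (-4) * cc u 2 * cc v 6 * cc v 10 + (-4) * cc u 2 * cc v 7 * cc v 8 + (-12) * cc u 3 * cc v 1 * cc v 19 + 20 * cc u 3 * cc v 5 * cc v 8 + 52 * cc u 3 * cc v 5 * cc v 9 + 12 * cc u 3 * cc v 5 * cc v 10 + 52 * cc u 3 * cc v 6 * cc v 6 + 12 * cc u 3 * cc v 6 * cc v 7 + 52 * cc u 4 * cc v 5 * cc v 6 + 12 *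 cc u 4 * cc v 5 * cc v 7 + 52 * cc u 5 * cc v 1 * cc v 15 + 2 * cc u 5 * cc v 1 * cc v 16 + 2 * cc u 5 * cc v 1 * cc v 17 + 20 * cc u 5 * cc v 2 * cc v 11 + 8 * cc u 5 * cc v 2 * cc v 12 + (-8) * cc u 5 * cc v 2 * cc v 13 + (-4) * cc u 5 * cc v 2 * cc v 14 + (-28) * cc u 5 * cc v 3 * cc v 8 + (-8) * cc u 5 * cc v 3 * cc v 9 + 12 * cc u 5 * cc v 3 * cc v 10 + (-44) * cc u 5 * cc v 4 * cc v 6 + 12 * cc u 5 * cc v 4 * cc v 7 + 12 * cc u 6 * cc v 1 * cc v 11 + 8 * cc u 6 * cc v 1 * cc v 12 + (-24) * cc u 6 * cc v 1 * cc v 13 + (-20) * cc u 6 * cc v 1 * cc v 14 + (-36) * cc u 6 * cc v 2 * cc v 8 + (-8) * cc u 6 * cc v 2 * cc v 9 + (-4) * cc u 6 * cc v 2 * cc v 10 + (-52) * cc u 6 * cc v 3 * cc v 6 + 12 * cc u 6 * cc v 3 * cc v 7 + (-8) * cc u 6 * cc v 4 * cc v 5 + 40 * cc u 7 * cc v 1 * cc v 11 + 8 * cc u 7 * cc v 2 * cc v 8 + (-24) * cc u 7 * cc v 3 * cc v 6 + (-24) * cc u 7 * cc v 4 * cc v 5 + (-20) * cc u 8 * cc v 1 * cc v 8 + (-24) * cc u 8 * cc v 1 * cc v 9 + (-20) * cc u 8 * cc v 1 * cc v 10 + (-36) * cc u 8 * cc v 2 * cc v 6 + (-4) * cc u 8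 * cc v 2 * cc v 7 + 8 * cc u 8 * cc v 3 * cc v 5 + (-12) * cc u 9 * cc v 1 * cc v 8 + (-44) * cc u 9 * cc v 2 * cc v 6 + (-44) * cc u 9 * cc v 3 * cc v 5 + 40 * cc u 10 * cc v 1 * cc v 8 + 8 * cc u 10 * cc v 2 * cc v 6 + (-24) * cc u 10 * cc v 3 * cc v 5 + (-36) * cc u 11 * cc v 1 * cc v 6 + (-20) * cc u 11 * cc v 1 * cc v 7 + 8 * cc u 11 * cc v 2 * cc v 5 + (-28) * cc u 12 * cc v 1 * cc v 6 + (-28) * cc u 12 * cc v 2 * cc v 5 + (-12) * cc u 13 * cc v 1 * cc v 6 + (-44) * cc u 13 * cc v 2 * cc v 5 + 40 * cc u 14 * cc v 1 * cc v 6 + 8 * cc u 14 * cc v 2 * cc v 5 + (-8) * cc u 15 * cc v 1 * cc v 5 + (-1) * cc u 16 * cc v 1 * cc v 5 + (-7) * cc u 17 * cc v 1 * cc v 5 + 24 * cc u 19 * cc v 1 * cc v 3 + 12 * cc u 19 * cc v 2 * cc v 2 + 24 * cc u 20 * cc v 1 * cc v 2 + 4 * cc u 21 * cc v 1 * cc v 1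
  | _ => 0 end.
Fact W2_key : unit. Proof. exact: tt. Qed.
Definition W2 (F : fieldType) (u v : 'rV[F]_24) : 'rV[F]_24 := locked_with W2_key (mkrow (fun k => W2c u v k)).
Lemma W2E (F : fieldType) (u v : 'rV[F]_24) k : (k < 24)%N -> cc (W2 u v) k = W2c u v k.
Proof. by move=> hk; rewrite /W2 unlock ccE. Qed.
Definition W3c (F : fieldType) (u v : 'rV[F]_24) (k : nat) : F := match k with
  | 11 => (-1) * cc u 1 * cc v 1 * cc v 1 * cc v 5 + cc u 5 * cc v 1 * cc v 1 * cc v 1
  | 12 => 3 * cc u 1 * cc v 1 * cc v 1 * cc v 5 + (-3) * cc u 5 * cc v 1 * cc v 1 * cc v 1
  | 13 => (-3) * cc u 1 * cc v 1 * cc v 1 * cc v 5 + 3 * cc u 5 * cc v 1 * cc v 1 * cc v 1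
  | 14 => cc u 1 * cc v 1 * cc v 1 * cc v 5 + (-1) * cc u 5 * cc v 1 * cc v 1 * cc v 1
  | 15 => (-1) * cc u 1 * cc v 1 * cc v 1 * cc v 6 + (-2) * cc u 1 * cc v 1 * cc v 2 * cc v 5 + (-1) * cc u 2 * cc v 1 * cc v 1 * cc v 5 + 3 * cc u 5 * cc v 1 * cc v 1 * cc v 2 + cc u 6 * cc v 1 * cc v 1 * cc v 1
  | 16 => 20 * cc u 1 * cc v 1 * cc v 1 * cc v 6 + 31 * cc u 1 * cc v 1 * cc v 1 * cc v 7 + 102 * cc u 1 * cc v 1 * cc v 2 * cc v 5 + 51 * cc u 2 * cc v 1 * cc v 1 * cc v 5 + (-153) * cc u 5 * cc v 1 * cc v 1 * cc v 2 + (-20) * cc u 6 * cc v 1 * cc v 1 * cc v 1 + (-31) * cc u 7 * cc v 1 * cc v 1 * cc v 1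
  | 17 => (-8) * cc u 1 * cc v 1 * cc v 1 * cc v 6 + (-5) * cc u 1 * cc v 1 * cc v 1 * cc v 7 + (-26) * cc u 1 * cc v 1 * cc v 2 * cc v 5 + (-13) * cc u 2 * cc v 1 * cc v 1 * cc v 5 + 39 * cc u 5 * cc v 1 * cc v 1 * cc v 2 + 8 * cc u 6 * cc v 1 * cc v 1 * cc v 1 + 5 * cc u 7 * cc v 1 * cc v 1 * cc v 1
  | 18 => (-4) * cc u 1 * cc v 1 * cc v 1 * cc v 8 + 16 * cc u 1 * cc v 1 * cc v 1 * cc v 9 + 36 * cc u 1 * cc v 1 * cc v 1 * cc v 10 + 24 * cc u 1 * cc v 1 * cc v 2 * cc v 6 + 104 * cc u 1 * cc v 1 * cc v 2 * cc v 7 + 96 * cc u 1 * cc v 1 * cc v 3 * cc v 5 + 64 * cc u 1 * cc v 2 * cc v 2 * cc v 5 + 12 * cc u 2 * cc v 1 * cc v 1 * cc v 6 + 52 * cc u 2 * cc v 1 * cc v 1 * cc v 7 + 128 * cc u 2 * cc v 1 * cc v 2 * cc v 5 + 48 * cc u 3 * cc v 1 * cc v 1 * cc v 5 + (-144) * cc u 5 * cc v 1 * cc v 1 * cc v 3 + (-192) * cc u 5 * cc v 1 * cc v 2 * cc v 2 + (-36) * cc u 6 * cc v 1 * cc v 1 * cc v 2 + (-156) * cc u 7 * cc v 1 * cc v 1 * cc v 2 + 4 * cc u 8 * cc v 1 * cc v 1 * cc v 1 + (-16) * cc u 9 * cc v 1 * cc v 1 * cc v 1 + (-36) * cc u 10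 * cc v 1 * cc v 1 * cc v 1
  | 20 => (-4) * cc u 1 * cc v 1 * cc v 5 * cc v 5 + 4 * cc u 5 * cc v 1 * cc v 1 * cc v 5
  | 21 => (-18) * cc u 1 * cc v 1 * cc v 5 * cc v 6 + (-6) * cc u 1 * cc v 1 * cc v 5 * cc v 7 + (-12) * cc u 1 * cc v 2 * cc v 5 * cc v 5 + (-12) * cc u 2 * cc v 1 * cc v 5 * cc v 5 + 7 * cc u 5 * cc v 1 * cc v 1 * cc v 6 + 5 * cc u 5 * cc v 1 * cc v 1 * cc v 7 + 24 * cc u 5 * cc v 1 * cc v 2 * cc v 5 + 11 * cc u 6 * cc v 1 * cc v 1 * cc v 5 + cc u 7 * cc v 1 * cc v 1 * cc v 5
  | 22 => (-12) * cc u 1 * cc v 1 * cc v 1 * cc v 19 + (-8) * cc u 1 * cc v 1 * cc v 5 * cc v 8 + (-24) * cc u 1 * cc v 1 * cc v 5 * cc v 9 + 40 * cc u 1 * cc v 1 * cc v 5 * cc v 10 + (-24) * cc u 1 * cc v 1 * cc v 6 * cc v 6 + 40 * cc u 1 * cc v 1 * cc v 6 * cc v 7 + (-56) * cc u 1 * cc v 2 * cc v 5 * cc v 6 + (-8) * cc u 1 * cc v 2 * cc v 5 * cc v 7 + (-32) * cc u 1 * cc v 3 * cc v 5 * cc v 5 + (-24) * cc u 2 * cc v 1 * cc v 5 * cc v 6 + 24 * cc u 2 * cc v 1 * cc v 5 * cc v 7 + (-48) * cc u 2 * cc v 2 * cc v 5 * cc v 5 + (-4) * cc u 5 * cc v 1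 * cc v 1 * cc v 8 + 20 * cc u 5 * cc v 1 * cc v 1 * cc v 9 + (-12) * cc u 5 * cc v 1 * cc v 1 * cc v 10 + 8 * cc u 5 * cc v 1 * cc v 2 * cc v 6 + (-8) * cc u 5 * cc v 1 * cc v 2 * cc v 7 + 32 * cc u 5 * cc v 1 * cc v 3 * cc v 5 + 48 * cc u 5 * cc v 2 * cc v 2 * cc v 5 + 24 * cc u 6 * cc v 1 * cc v 1 * cc v 6 + (-12) * cc u 6 * cc v 1 * cc v 1 * cc v 7 + 72 * cc u 6 * cc v 1 * cc v 2 * cc v 5 + (-28) * cc u 7 * cc v 1 * cc v 1 * cc v 6 + (-8) * cc u 7 * cc v 1 * cc v 2 * cc v 5 + 12 * cc u 8 * cc v 1 * cc v 1 * cc v 5 + 4 * cc u 9 * cc v 1 * cc v 1 * cc v 5 + (-28) * cc u 10 * cc v 1 * cc v 1 * cc v 5 + 12 * cc u 19 * cc v 1 * cc v 1 * cc v 1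
  | 23 => (-12) * cc u 1 * cc v 1 * cc v 1 * cc v 20 + (-24) * cc u 1 * cc v 1 * cc v 2 * cc v 19 + 24 * cc u 1 * cc v 1 * cc v 5 * cc v 11 + (-24) * cc u 1 * cc v 1 * cc v 5 * cc v 12 + 40 * cc u 1 * cc v 1 * cc v 5 * cc v 13 + 72 * cc u 1 * cc v 1 * cc v 5 * cc v 14 + 16 * cc u 1 * cc v 1 * cc v 6 * cc v 8 + 40 * cc u 1 * cc v 1 * cc v 6 * cc v 9 + 72 * cc u 1 * cc v 1 * cc v 6 * cc v 10 + 72 * cc u 1 * cc v 1 * cc v 7 * cc v 8 + 8 * cc u 1 * cc v 2 * cc v 5 * cc v 8 + (-8) * cc u 1 * cc v 2 * cc v 5 * cc v 9 + 56 * cc u 1 * cc v 2 * cc v 5 * cc v 10 + (-8) * cc u 1 * cc v 2 * cc v 6 * cc v 6 + 56 * cc u 1 * cc v 2 * cc v 6 * cc v 7 + (-24) * cc u 1 * cc v 3 * cc v 5 * cc v 6 + 8 * cc u 1 * cc v 3 * cc v 5 * cc v 7 + (-16) * cc u 1 * cc v 4 * cc v 5 * cc v 5 + (-12) * cc u 2 * cc v 1 * cc v 1 * cc v 19 + 40 * cc u 2 * cc v 1 * cc v 5 * cc v 8 + 24 * cc u 2 * cc v 1 * cc v 5 * cc v 9 + 88 * cc u 2 * cc v 1 * cc v 5 * cc v 10 + 24 * cc u 2 * cc v 1 * cc v 6 * cc v 6 + 88 * cc u 2 * cc v 1 * cc v 6 * cc v 7 + (-8) * cc u 2 * cc v 2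 * cc v 5 * cc v 6 + 40 * cc u 2 * cc v 2 * cc v 5 * cc v 7 + (-32) * cc u 2 * cc v 3 * cc v 5 * cc v 5 + 72 * cc u 3 * cc v 1 * cc v 5 * cc v 6 + 72 * cc u 3 * cc v 1 * cc v 5 * cc v 7 + 48 * cc u 4 * cc v 1 * cc v 5 * cc v 5 + (-24) * cc u 5 * cc v 1 * cc v 1 * cc v 11 + 20 * cc u 5 * cc v 1 * cc v 1 * cc v 12 + (-12) * cc u 5 * cc v 1 * cc v 1 * cc v 13 + (-24) * cc u 5 * cc v 1 * cc v 1 * cc v 14 + (-128) * cc u 5 * cc v 1 * cc v 2 * cc v 8 + (-8) * cc u 5 * cc v 1 * cc v 2 * cc v 9 + (-128) * cc u 5 * cc v 1 * cc v 3 * cc v 6 + 16 * cc u 5 * cc v 1 * cc v 3 * cc v 7 + (-32) * cc u 5 * cc v 1 * cc v 4 * cc v 5 + (-56) * cc u 5 * cc v 2 * cc v 2 * cc v 6 + 8 * cc u 5 * cc v 2 * cc v 2 * cc v 7 + 32 * cc u 5 * cc v 2 * cc v 3 * cc v 5 + (-8) * cc u 6 * cc v 1 * cc v 1 * cc v 8 + (-12) * cc u 6 * cc v 1 * cc v 1 * cc v 9 + (-24) * cc u 6 * cc v 1 * cc v 1 * cc v 10 + (-16) * cc u 6 * cc v 1 * cc v 2 * cc v 6 + 80 * cc u 6 * cc v 1 * cc v 3 * cc v 5 + 64 * cc u 6 * cc v 2 * cc v 2 * cc v 5 + (-48) * cc u 7 * cc v 1 * cc v 1 * cc v 8 + (-144)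 * cc u 7 * cc v 1 * cc v 2 * cc v 6 + (-96) * cc u 7 * cc v 1 * cc v 3 * cc v 5 + (-48) * cc u 7 * cc v 2 * cc v 2 * cc v 5 + (-8) * cc u 8 * cc v 1 * cc v 1 * cc v 6 + (-24) * cc u 8 * cc v 1 * cc v 1 * cc v 7 + 80 * cc u 8 * cc v 1 * cc v 2 * cc v 5 + (-28) * cc u 9 * cc v 1 * cc v 1 * cc v 6 + (-8) * cc u 9 * cc v 1 * cc v 2 * cc v 5 + (-48) * cc u 10 * cc v 1 * cc v 1 * cc v 6 + (-144) * cc u 10 * cc v 1 * cc v 2 * cc v 5 + 4 * cc u 12 * cc v 1 * cc v 1 * cc v 5 + (-28) * cc u 13 * cc v 1 * cc v 1 * cc v 5 + (-48) * cc u 14 * cc v 1 * cc v 1 * cc v 5 + 36 * cc u 19 * cc v 1 * cc v 1 * cc v 2 + 12 * cc u 20 * cc v 1 * cc v 1 * cc v 1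
  | _ => 0 end.
Fact W3_key : unit. Proof. exact: tt. Qed.
Definition W3 (F : fieldType) (u v : 'rV[F]_24) : 'rV[F]_24 := locked_with W3_key (mkrow (fun k => W3c u v k)).
Lemma W3E (F : fieldType) (u v : 'rV[F]_24) k : (k < 24)%N -> cc (W3 u v) k = W3c u v k.
Proof. by move=> hk; rewrite /W3 unlock ccE. Qed.
Definition W4c (F : fieldType) (u v : 'rV[F]_24) (k : nat) : F := match k with
  | 15 => (-1) * cc u 1 * cc v 1 * cc v 1 * cc v 1 * cc v 5 + cc u 5 * cc v 1 * cc v 1 * cc v 1 * cc v 1
  | 16 => (-11) * cc u 1 * cc v 1 * cc v 1 * cc v 1 * cc v 5 + 11 * cc u 5 * cc v 1 * cc v 1 * cc v 1 * cc v 1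
  | 17 => (-3) * cc u 1 * cc v 1 * cc v 1 * cc v 1 * cc v 5 + 3 * cc u 5 * cc v 1 * cc v 1 * cc v 1 * cc v 1
  | 18 => (-20) * cc u 1 * cc v 1 * cc v 1 * cc v 1 * cc v 6 + (-20) * cc u 1 * cc v 1 * cc v 1 * cc v 1 * cc v 7 + (-120) * cc u 1 * cc v 1 * cc v 1 * cc v 2 * cc v 5 + (-40) * cc u 2 * cc v 1 * cc v 1 * cc v 1 * cc v 5 + 160 * cc u 5 * cc v 1 * cc v 1 * cc v 1 * cc v 2 + 20 * cc u 6 * cc v 1 * cc v 1 * cc v 1 * cc v 1 + 20 * cc u 7 * cc v 1 * cc v 1 * cc v 1 * cc v 1
  | 21 => (-10) * cc u 1 * cc v 1 * cc v 1 * cc v 5 * cc v 5 + 10 * cc u 5 * cc v 1 * cc v 1 * cc v 1 * cc v 5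
  | 22 => (-60) * cc u 1 * cc v 1 * cc v 1 * cc v 5 * cc v 6 + (-20) * cc u 1 * cc v 1 * cc v 1 * cc v 5 * cc v 7 + (-80) * cc u 1 * cc v 1 * cc v 2 * cc v 5 * cc v 5 + (-40) * cc u 2 * cc v 1 * cc v 1 * cc v 5 * cc v 5 + 40 * cc u 5 * cc v 1 * cc v 1 * cc v 1 * cc v 6 + 120 * cc u 5 * cc v 1 * cc v 1 * cc v 2 * cc v 5 + 20 * cc u 6 * cc v 1 * cc v 1 * cc v 1 * cc v 5 + 20 * cc u 7 * cc v 1 * cc v 1 * cc v 1 * cc v 5
  | 23 => (-12) * cc u 1 * cc v 1 * cc v 1 * cc v 1 * cc v 19 + (-36) * cc u 1 * cc v 1 * cc v 1 * cc v 5 * cc v 8 + (-20) * cc u 1 * cc v 1 * cc v 1 * cc v 5 * cc v 9 + 4 * cc u 1 * cc v 1 * cc v 1 * cc v 5 * cc v 10 + (-20) * cc u 1 * cc v 1 * cc v 1 * cc v 6 * cc v 6 + 4 * cc u 1 * cc v 1 * cc v 1 * cc v 6 * cc v 7 + (-216) * cc u 1 * cc v 1 * cc v 2 * cc v 5 * cc v 6 + (-136) * cc u 1 * cc v 1 * cc v 2 * cc v 5 * cc v 7 + (-176) * cc u 1 * cc v 1 * cc v 3 * cc v 5 * cc v 5 + (-112) * cc u 1 * cc v 2 * cc v 2 * cc v 5 * cc v 5 + (-68) * cc u 2 * cc v 1 * cc v 1 * cc v 5 * cc v 6 + (-28) * cc u 2 * cc v 1 * cc v 1 * cc v 5 * cc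 v 7 + (-224) * cc u 2 * cc v 1 * cc v 2 * cc v 5 * cc v 5 + (-48) * cc u 3 * cc v 1 * cc v 1 * cc v 5 * cc v 5 + 28 * cc u 5 * cc v 1 * cc v 1 * cc v 1 * cc v 8 + (-12) * cc u 5 * cc v 1 * cc v 1 * cc v 1 * cc v 10 + 132 * cc u 5 * cc v 1 * cc v 1 * cc v 2 * cc v 6 + 12 * cc u 5 * cc v 1 * cc v 1 * cc v 2 * cc v 7 + 224 * cc u 5 * cc v 1 * cc v 1 * cc v 3 * cc v 5 + 336 * cc u 5 * cc v 1 * cc v 2 * cc v 2 * cc v 5 + 20 * cc u 6 * cc v 1 * cc v 1 * cc v 1 * cc v 6 + (-12) * cc u 6 * cc v 1 * cc v 1 * cc v 1 * cc v 7 + 152 * cc u 6 * cc v 1 * cc v 1 * cc v 2 * cc v 5 + 8 * cc u 7 * cc v 1 * cc v 1 * cc v 1 * cc v 6 + 152 * cc u 7 * cc v 1 * cc v 1 * cc v 2 * cc v 5 + 8 * cc u 8 * cc v 1 * cc v 1 * cc v 1 * cc v 5 + 20 * cc u 9 * cc v 1 * cc v 1 * cc v 1 * cc v 5 + 8 * cc u 10 * cc v 1 * cc v 1 * cc v 1 * cc v 5 + 12 * cc u 19 * cc v 1 * cc v 1 * cc v 1 * cc v 1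
  | _ => 0 end.
Fact W4_key : unit. Proof. exact: tt. Qed.
Definition W4 (F : fieldType) (u v : 'rV[F]_24) : 'rV[F]_24 := locked_with W4_key (mkrow (fun k => W4c u v k)).
Lemma W4E (F : fieldType) (u v : 'rV[F]_24) k : (k < 24)%N -> cc (W4 u v) k = W4c u v k.
Proof. by move=> hk; rewrite /W4 unlock ccE. Qed.

Lemma engel1 (F : fieldType) (u v : Rt F) : lie_iter u v 1 = W1 u v.
Proof. have -> : lie_iter u v 1 = u * v - v * u by []. crunch2; rewrite ?W1E //=; ring. Qed.
Lemma engel2 (F : fieldType) (u v : Rt F) : lie_iter u v 2 = W2 u v.
Proof.
have -> : lie_iter u v 2 = lie_br (lie_iter u v 1) v by [].
rewrite engel1 /lie_br; crunch2; rewrite ?W2E ?W1E //=; ring.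
Qed.
Lemma engel3 (F : fieldType) (u v : Rt F) : lie_iter u v 3 = W3 u v.
Proof.
have -> : lie_iter u v 3 = lie_br (lie_iter u v 2) v by [].
rewrite engel2 /lie_br; crunch2; rewrite ?W3E ?W2E //=; ring.
Qed.
Lemma engel4 (F : fieldType) (u v : Rt F) : lie_iter u v 4 = W4 u v.
Proof.
have -> : lie_iter u v 4 = lie_br (lie_iter u v 3) v by [].
rewrite engel3 /lie_br; crunch2; rewrite ?W4E ?W3E //=; ring.
Qed.
Lemma engel (F : fieldType) : lie_engel (Rt F) 5.
Proof.
move=> u v.
have -> : lie_iter u v 5 = lie_br (lie_iter u v 4) v by [].
rewrite engel4 /lie_br; crunch2; rewrite ?W4E //=; ring.
Qed.
Definition XRc (F : fieldType) (k : nat) : F := match k with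
  | 5 => 1
  | _ => 0 end.
Fact XR_key : unit. Proof. exact: tt. Qed.
Definition XR (F : fieldType) : Rt F := locked_with XR_key (mkrow (fun k => XRc F k)).
Lemma XRE (F : fieldType) k : (k < 24)%N -> cc (XR F) k = XRc F k.
Proof. by move=> hk; rewrite /XR unlock ccE. Qed.
Definition YRc (F : fieldType) (k : nat) : F := match k with
  | 1 => 1
  | _ => 0 end.
Fact YR_key : unit. Proof. exact: tt. Qed.
Definition YR (F : fieldType) : Rt F := locked_with YR_key (mkrow (fun k => YRc F k)).
Lemma YRE (F : fieldType) k : (k < 24)%N -> cc (YR F) k = YRc F k.
Proof. by move=> hk; rewrite /YR unlock ccE. Qed.
Definition ZRc (F : fieldType) (k : nat) : F := match k with
  | _ => 0 end.
Fact ZR_key : unit. Proof. exact: tt. Qed.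
Definition ZR (F : fieldType) : Rt F := locked_with ZR_key (mkrow (fun k => ZRc F k)).
Lemma ZRE (F : fieldType) k : (k < 24)%N -> cc (ZR F) k = ZRc F k.
Proof. by move=> hk; rewrite /ZR unlock ccE. Qed.
Definition ARc (F : fieldType) (k : nat) : F := match k with
  | 0 => 1
  | 5 => 1
  | _ => 0 end.
Fact AR_key : unit. Proof. exact: tt. Qed.
Definition AR (F : fieldType) : Rt F := locked_with AR_key (mkrow (fun k => ARc F k)).
Lemma ARE (F : fieldType) k : (k < 24)%N -> cc (AR F) k = ARc F k.
Proof. by move=> hk; rewrite /AR unlock ccE. Qed.
Definition AIc (F : fieldType) (k : nat) : F := match k with
  | 0 => 1
  | 5 => (-1)
  | _ => 0 end.
Fact AI_key : unit. Proof. exact: tt. Qed.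
Definition AI (F : fieldType) : Rt F := locked_with AI_key (mkrow (fun k => AIc F k)).
Lemma AIE (F : fieldType) k : (k < 24)%N -> cc (AI F) k = AIc F k.
Proof. by move=> hk; rewrite /AI unlock ccE. Qed.
Definition BRc (F : fieldType) (k : nat) : F := match k with
  | 0 => 1
  | 1 => 1
  | _ => 0 end.
Fact BR_key : unit. Proof. exact: tt. Qed.
Definition BR (F : fieldType) : Rt F := locked_with BR_key (mkrow (fun k => BRc F k)).
Lemma BRE (F : fieldType) k : (k < 24)%N -> cc (BR F) k = BRc F k.
Proof. by move=> hk; rewrite /BR unlock ccE. Qed.
Definition BIc (F : fieldType) (k : nat) : F := match k with
  | 0 => 1
  | 1 => (-1)
  | 2 => 1
  | 3 => (-1)
  | 4 => 1
  | _ => 0 end.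
Fact BI_key : unit. Proof. exact: tt. Qed.
Definition BI (F : fieldType) : Rt F := locked_with BI_key (mkrow (fun k => BIc F k)).
Lemma BIE (F : fieldType) k : (k < 24)%N -> cc (BI F) k = BIc F k.
Proof. by move=> hk; rewrite /BI unlock ccE. Qed.
Definition ONEc (F : fieldType) (k : nat) : F := match k with
  | 0 => 1
  | _ => 0 end.
Fact ONE_key : unit. Proof. exact: tt. Qed.
Definition ONE (F : fieldType) : Rt F := locked_with ONE_key (mkrow (fun k => ONEc F k)).
Lemma ONEE (F : fieldType) k : (k < 24)%N -> cc (ONE F) k = ONEc F k.
Proof. by move=> hk; rewrite /ONE unlock ccE. Qed.
Lemma AAI (F : fieldType) : ((AR F) * (AI F) : Rt F) = ONE F.
Proof. crunch2; rewrite ?ARE ?AIE ?ONEE //=; ring. Qed.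
Lemma AIA (F : fieldType) : ((AI F) * (AR F) : Rt F) = ONE F.
Proof. crunch2; rewrite ?AIE ?ARE ?ONEE //=; ring. Qed.
Lemma BBI (F : fieldType) : ((BR F) * (BI F) : Rt F) = ONE F.
Proof. crunch2; rewrite ?BRE ?BIE ?ONEE //=; ring. Qed.
Lemma BIB (F : fieldType) : ((BI F) * (BR F) : Rt F) = ONE F.
Proof. crunch2; rewrite ?BIE ?BRE ?ONEE //=; ring. Qed.
Lemma gstep (R : pzRingType) (A A' B B' : R) k C C' :
  gcomm_iter A A' B B' k = (C, C') ->
  gcomm_iter A A' B B' k.+1 = (C' * B' * C * B, B' * C' * B * C).
Proof. by move=> h; rewrite /= h. Qed.
Lemma oneE (F : fieldType) : ONE F = 1.
Proof. apply: rowext; apply: all24; rewrite ONEE ?cc1 //. Qed.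
Definition P1_1c (F : fieldType) (k : nat) : F := match k with
  | 0 => 1
  | 1 => (-1)
  | 2 => 1
  | 3 => (-1)
  | 4 => 1
  | 5 => (-1)
  | 6 => 1
  | 8 => (-1)
  | 11 => 1
  | 15 => (-1)
  | _ => 0 end.
Fact P1_1_key : unit. Proof. exact: tt. Qed.
Definition P1_1 (F : fieldType) : Rt F := locked_with P1_1_key (mkrow (fun k => P1_1c F k)).
Lemma P1_1E (F : fieldType) k : (k < 24)%N -> cc (P1_1 F) k = P1_1c F k.
Proof. by move=> hk; rewrite /P1_1 unlock ccE. Qed.
Definition P2_1c (F : fieldType) (k : nat) : F := match k with
  | 0 => 1
  | 1 => (-1)
  | 2 => 1
  | 3 => (-1)
  | 4 => 1
  | 6 => 1
  | 7 => (-1)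
  | 8 => (-1)
  | 10 => 1
  | 11 => 1
  | 14 => (-1)
  | 15 => (-1)
  | 16 => (-5)
  | 17 => (-5)
  | 19 => 1
  | 20 => (-1)
  | 21 => (-1)
  | 22 => 20
  | _ => 0 end.
Fact P2_1_key : unit. Proof. exact: tt. Qed.
Definition P2_1 (F : fieldType) : Rt F := locked_with P2_1_key (mkrow (fun k => P2_1c F k)).
Lemma P2_1E (F : fieldType) k : (k < 24)%N -> cc (P2_1 F) k = P2_1c F k.
Proof. by move=> hk; rewrite /P2_1 unlock ccE. Qed.
Definition C_1c (F : fieldType) (k : nat) : F := match k with
  | 0 => 1
  | 6 => 1
  | 7 => (-1)
  | 9 => (-1)
  | 10 => 1
  | 13 => 1
  | 14 => (-1)
  | 16 => 11
  | 17 => (-9)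
  | 18 => (-20)
  | 19 => 1
  | 21 => (-4)
  | 22 => 16
  | 23 => 20
  | _ => 0 end.
Fact C_1_key : unit. Proof. exact: tt. Qed.
Definition C_1 (F : fieldType) : Rt F := locked_with C_1_key (mkrow (fun k => C_1c F k)).
Lemma C_1E (F : fieldType) k : (k < 24)%N -> cc (C_1 F) k = C_1c F k.
Proof. by move=> hk; rewrite /C_1 unlock ccE. Qed.
Definition Q1_1c (F : fieldType) (k : nat) : F := match k with
  | 0 => 1
  | 1 => (-1)
  | 2 => 1
  | 3 => (-1)
  | 4 => 1
  | 5 => (-1)
  | 7 => 1
  | 10 => (-1)
  | 14 => 1
  | 16 => 5
  | 17 => 5
  | _ => 0 end.
Fact Q1_1_key : unit. Proof. exact: tt. Qed.
Definition Q1_1 (F : fieldType) : Rt F := locked_with Q1_1_key (mkrow (fun k => Q1_1c F k)).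
Lemma Q1_1E (F : fieldType) k : (k < 24)%N -> cc (Q1_1 F) k = Q1_1c F k.
Proof. by move=> hk; rewrite /Q1_1 unlock ccE. Qed.
Definition Q2_1c (F : fieldType) (k : nat) : F := match k with
  | 0 => 1
  | 5 => (-1)
  | 6 => (-1)
  | 7 => 1
  | 9 => 1
  | 10 => (-1)
  | 13 => (-1)
  | 14 => 1
  | 16 => (-11)
  | 17 => 9
  | 18 => 20
  | _ => 0 end.
Fact Q2_1_key : unit. Proof. exact: tt. Qed.
Definition Q2_1 (F : fieldType) : Rt F := locked_with Q2_1_key (mkrow (fun k => Q2_1c F k)).
Lemma Q2_1E (F : fieldType) k : (k < 24)%N -> cc (Q2_1 F) k = Q2_1c F k.
Proof. by move=> hk; rewrite /Q2_1 unlock ccE. Qed.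
Definition CI_1c (F : fieldType) (k : nat) : F := match k with
  | 0 => 1
  | 6 => (-1)
  | 7 => 1
  | 9 => 1
  | 10 => (-1)
  | 13 => (-1)
  | 14 => 1
  | 16 => (-11)
  | 17 => 9
  | 18 => 20
  | 19 => (-1)
  | _ => 0 end.
Fact CI_1_key : unit. Proof. exact: tt. Qed.
Definition CI_1 (F : fieldType) : Rt F := locked_with CI_1_key (mkrow (fun k => CI_1c F k)).
Lemma CI_1E (F : fieldType) k : (k < 24)%N -> cc (CI_1 F) k = CI_1c F k.
Proof. by move=> hk; rewrite /CI_1 unlock ccE. Qed.
Lemma lp1_1 (F : fieldType) : ((AI F) * (BI F) : Rt F) = P1_1 F.
Proof. crunch2; rewrite ?AIE ?BIE ?P1_1E //=; ring. Qed.
Lemma lp2_1 (F : fieldType) : ((P1_1 F) * (AR F) : Rt F) = P2_1 F.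
Proof. crunch2; rewrite ?P1_1E ?ARE ?P2_1E //=; ring. Qed.
Lemma lp3_1 (F : fieldType) : ((P2_1 F) * (BR F) : Rt F) = C_1 F.
Proof. crunch2; rewrite ?P2_1E ?BRE ?C_1E //=; ring. Qed.
Lemma lq1_1 (F : fieldType) : ((BI F) * (AI F) : Rt F) = Q1_1 F.
Proof. crunch2; rewrite ?BIE ?AIE ?Q1_1E //=; ring. Qed.
Lemma lq2_1 (F : fieldType) : ((Q1_1 F) * (BR F) : Rt F) = Q2_1 F.
Proof. crunch2; rewrite ?Q1_1E ?BRE ?Q2_1E //=; ring. Qed.
Lemma lq3_1 (F : fieldType) : ((Q2_1 F) * (AR F) : Rt F) = CI_1 F.
Proof. crunch2; rewrite ?Q2_1E ?ARE ?CI_1E //=; ring. Qed.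
Lemma g1 (F : fieldType) : gcomm_iter (AR F) (AI F) (BR F) (BI F) 1 = (C_1 F, CI_1 F).
Proof.
rewrite (@gstep _ (AR F) (AI F) (BR F) (BI F) 0 (AR F) (AI F) erefl).
by rewrite lp1_1 lp2_1 lp3_1 lq1_1 lq2_1 lq3_1.
Qed.
Definition P1_2c (F : fieldType) (k : nat) : F := match k with
  | 0 => 1
  | 1 => (-1)
  | 2 => 1
  | 3 => (-1)
  | 4 => 1
  | 6 => (-1)
  | 7 => 1
  | 8 => 1
  | 10 => (-1)
  | 11 => (-1)
  | 14 => 1
  | 15 => 1
  | 16 => 5
  | 17 => 5
  | 19 => (-1)
  | 20 => 1
  | 21 => (-3)
  | 22 => 12
  | 23 => (-12)
  | _ => 0 end.
Fact P1_2_key : unit. Proof. exact: tt. Qed.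
Definition P1_2 (F : fieldType) : Rt F := locked_with P1_2_key (mkrow (fun k => P1_2c F k)).
Lemma P1_2E (F : fieldType) k : (k < 24)%N -> cc (P1_2 F) k = P1_2c F k.
Proof. by move=> hk; rewrite /P1_2 unlock ccE. Qed.
Definition P2_2c (F : fieldType) (k : nat) : F := match k with
  | 0 => 1
  | 1 => (-1)
  | 2 => 1
  | 3 => (-1)
  | 4 => 1
  | 8 => 1
  | 9 => (-2)
  | 10 => 1
  | 11 => (-1)
  | 13 => 3
  | 14 => (-2)
  | 15 => 1
  | 16 => 49
  | 17 => (-31)
  | 18 => (-100)
  | 20 => 1
  | 21 => 1
  | 22 => (-20)
  | 23 => (-72)
  | _ => 0 end.
Fact P2_2_key : unit. Proof. exact: tt. Qed.
Definition P2_2 (F : fieldType) : Rt F := locked_with P2_2_key (mkrow (fun k => P2_2c F k)).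
Lemma P2_2E (F : fieldType) k : (k < 24)%N -> cc (P2_2 F) k = P2_2c F k.
Proof. by move=> hk; rewrite /P2_2 unlock ccE. Qed.
Definition C_2c (F : fieldType) (k : nat) : F := match k with
  | 0 => 1
  | 8 => 1
  | 9 => (-2)
  | 10 => 1
  | 12 => (-2)
  | 13 => 4
  | 14 => (-2)
  | 16 => 81
  | 17 => (-27)
  | 18 => (-144)
  | 20 => 1
  | 21 => 4
  | 22 => (-16)
  | 23 => (-92)
  | _ => 0 end.
Fact C_2_key : unit. Proof. exact: tt. Qed.
Definition C_2 (F : fieldType) : Rt F := locked_with C_2_key (mkrow (fun k => C_2c F k)).
Lemma C_2E (F : fieldType) k : (k < 24)%N -> cc (C_2 F) k = C_2c F k.
Proof. by move=> hk; rewrite /C_2 unlock ccE. Qed.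
Definition Q1_2c (F : fieldType) (k : nat) : F := match k with
  | 0 => 1
  | 1 => (-1)
  | 2 => 1
  | 3 => (-1)
  | 4 => 1
  | 6 => (-1)
  | 7 => 1
  | 9 => 2
  | 10 => (-2)
  | 13 => (-3)
  | 14 => 3
  | 16 => (-44)
  | 17 => 36
  | 18 => 100
  | 19 => (-1)
  | _ => 0 end.
Fact Q1_2_key : unit. Proof. exact: tt. Qed.
Definition Q1_2 (F : fieldType) : Rt F := locked_with Q1_2_key (mkrow (fun k => Q1_2c F k)).
Lemma Q1_2E (F : fieldType) k : (k < 24)%N -> cc (Q1_2 F) k = Q1_2c F k.
Proof. by move=> hk; rewrite /Q1_2 unlock ccE. Qed.
Definition Q2_2c (F : fieldType) (k : nat) : F := match k with
  | 0 => 1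
  | 6 => (-1)
  | 7 => 1
  | 8 => (-1)
  | 9 => 3
  | 10 => (-2)
  | 12 => 2
  | 13 => (-5)
  | 14 => 3
  | 16 => (-92)
  | 17 => 36
  | 18 => 164
  | 19 => (-1)
  | 20 => (-1)
  | _ => 0 end.
Fact Q2_2_key : unit. Proof. exact: tt. Qed.
Definition Q2_2 (F : fieldType) : Rt F := locked_with Q2_2_key (mkrow (fun k => Q2_2c F k)).
Lemma Q2_2E (F : fieldType) k : (k < 24)%N -> cc (Q2_2 F) k = Q2_2c F k.
Proof. by move=> hk; rewrite /Q2_2 unlock ccE. Qed.
Definition CI_2c (F : fieldType) (k : nat) : F := match k with
  | 0 => 1
  | 8 => (-1)
  | 9 => 2
  | 10 => (-1)
  | 12 => 2
  | 13 => (-4)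
  | 14 => 2
  | 16 => (-81)
  | 17 => 27
  | 18 => 144
  | 20 => (-1)
  | 21 => (-4)
  | 22 => 16
  | 23 => 20
  | _ => 0 end.
Fact CI_2_key : unit. Proof. exact: tt. Qed.
Definition CI_2 (F : fieldType) : Rt F := locked_with CI_2_key (mkrow (fun k => CI_2c F k)).
Lemma CI_2E (F : fieldType) k : (k < 24)%N -> cc (CI_2 F) k = CI_2c F k.
Proof. by move=> hk; rewrite /CI_2 unlock ccE. Qed.
Lemma lp1_2 (F : fieldType) : ((CI_1 F) * (BI F) : Rt F) = P1_2 F.
Proof. crunch2; rewrite ?CI_1E ?BIE ?P1_2E //=; ring. Qed.
Lemma lp2_2 (F : fieldType) : ((P1_2 F) * (C_1 F) : Rt F) = P2_2 F.
Proof. crunch2; rewrite ?P1_2E ?C_1E ?P2_2E //=; ring. Qed.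
Lemma lp3_2 (F : fieldType) : ((P2_2 F) * (BR F) : Rt F) = C_2 F.
Proof. crunch2; rewrite ?P2_2E ?BRE ?C_2E //=; ring. Qed.
Lemma lq1_2 (F : fieldType) : ((BI F) * (CI_1 F) : Rt F) = Q1_2 F.
Proof. crunch2; rewrite ?BIE ?CI_1E ?Q1_2E //=; ring. Qed.
Lemma lq2_2 (F : fieldType) : ((Q1_2 F) * (BR F) : Rt F) = Q2_2 F.
Proof. crunch2; rewrite ?Q1_2E ?BRE ?Q2_2E //=; ring. Qed.
Lemma lq3_2 (F : fieldType) : ((Q2_2 F) * (C_1 F) : Rt F) = CI_2 F.
Proof. crunch2; rewrite ?Q2_2E ?C_1E ?CI_2E //=; ring. Qed.
Lemma g2 (F : fieldType) : gcomm_iter (AR F) (AI F) (BR F) (BI F) 2 = (C_2 F, CI_2 F).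
Proof.
rewrite (gstep (g1 F)).
by rewrite lp1_2 lp2_2 lp3_2 lq1_2 lq2_2 lq3_2.
Qed.
Definition P1_3c (F : fieldType) (k : nat) : F := match k with
  | 0 => 1
  | 1 => (-1)
  | 2 => 1
  | 3 => (-1)
  | 4 => 1
  | 8 => (-1)
  | 9 => 2
  | 10 => (-1)
  | 11 => 1
  | 13 => (-3)
  | 14 => 2
  | 15 => (-1)
  | 16 => (-49)
  | 17 => 31
  | 18 => 100
  | 20 => (-1)
  | 21 => (-1)
  | 22 => 20
  | _ => 0 end.
Fact P1_3_key : unit. Proof. exact: tt. Qed.
Definition P1_3 (F : fieldType) : Rt F := locked_with P1_3_key (mkrow (fun k => P1_3c F k)).
Lemma P1_3E (F : fieldType) k : (k < 24)%N -> cc (P1_3 F) k = P1_3c F k.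
Proof. by move=> hk; rewrite /P1_3 unlock ccE. Qed.
Definition P2_3c (F : fieldType) (k : nat) : F := match k with
  | 0 => 1
  | 1 => (-1)
  | 2 => 1
  | 3 => (-1)
  | 4 => 1
  | 11 => 1
  | 12 => (-3)
  | 13 => 3
  | 14 => (-1)
  | 15 => (-1)
  | 16 => 113
  | 17 => (-23)
  | 18 => (-260)
  | 21 => 3
  | 22 => 4
  | 23 => 16
  | _ => 0 end.
Fact P2_3_key : unit. Proof. exact: tt. Qed.
Definition P2_3 (F : fieldType) : Rt F := locked_with P2_3_key (mkrow (fun k => P2_3c F k)).
Lemma P2_3E (F : fieldType) k : (k < 24)%N -> cc (P2_3 F) k = P2_3c F k.
Proof. by move=> hk; rewrite /P2_3 unlock ccE. Qed.
Definition C_3c (F : fieldType) (k : nat) : F := match k with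
  | 0 => 1
  | 11 => 1
  | 12 => (-3)
  | 13 => 3
  | 14 => (-1)
  | 16 => 93
  | 17 => (-15)
  | 18 => (-216)
  | 21 => 3
  | 22 => 16
  | 23 => 20
  | _ => 0 end.
Fact C_3_key : unit. Proof. exact: tt. Qed.
Definition C_3 (F : fieldType) : Rt F := locked_with C_3_key (mkrow (fun k => C_3c F k)).
Lemma C_3E (F : fieldType) k : (k < 24)%N -> cc (C_3 F) k = C_3c F k.
Proof. by move=> hk; rewrite /C_3 unlock ccE. Qed.
Definition Q1_3c (F : fieldType) (k : nat) : F := match k with
  | 0 => 1
  | 1 => (-1)
  | 2 => 1
  | 3 => (-1)
  | 4 => 1
  | 8 => (-1)
  | 9 => 2
  | 10 => (-1)
  | 12 => 3
  | 13 => (-6)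
  | 14 => 3
  | 16 => (-162)
  | 17 => 54
  | 18 => 360
  | 20 => (-1)
  | 21 => (-4)
  | 22 => 16
  | 23 => 20
  | _ => 0 end.
Fact Q1_3_key : unit. Proof. exact: tt. Qed.
Definition Q1_3 (F : fieldType) : Rt F := locked_with Q1_3_key (mkrow (fun k => Q1_3c F k)).
Lemma Q1_3E (F : fieldType) k : (k < 24)%N -> cc (Q1_3 F) k = Q1_3c F k.
Proof. by move=> hk; rewrite /Q1_3 unlock ccE. Qed.
Definition Q2_3c (F : fieldType) (k : nat) : F := match k with
  | 0 => 1
  | 8 => (-1)
  | 9 => 2
  | 10 => (-1)
  | 11 => (-1)
  | 12 => 5
  | 13 => (-7)
  | 14 => 3
  | 16 => (-174)
  | 17 => 42
  | 18 => 360
  | 20 => (-1)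
  | 21 => (-7)
  | 23 => 36
  | _ => 0 end.
Fact Q2_3_key : unit. Proof. exact: tt. Qed.
Definition Q2_3 (F : fieldType) : Rt F := locked_with Q2_3_key (mkrow (fun k => Q2_3c F k)).
Lemma Q2_3E (F : fieldType) k : (k < 24)%N -> cc (Q2_3 F) k = Q2_3c F k.
Proof. by move=> hk; rewrite /Q2_3 unlock ccE. Qed.
Definition CI_3c (F : fieldType) (k : nat) : F := match k with
  | 0 => 1
  | 11 => (-1)
  | 12 => 3
  | 13 => (-3)
  | 14 => 1
  | 16 => (-93)
  | 17 => 15
  | 18 => 216
  | 21 => (-3)
  | 22 => (-16)
  | 23 => (-20)
  | _ => 0 end.
Fact CI_3_key : unit. Proof. exact: tt. Qed.
Definition CI_3 (F : fieldType) : Rt F := locked_with CI_3_key (mkrow (fun k => CI_3c F k)).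
Lemma CI_3E (F : fieldType) k : (k < 24)%N -> cc (CI_3 F) k = CI_3c F k.
Proof. by move=> hk; rewrite /CI_3 unlock ccE. Qed.
Lemma lp1_3 (F : fieldType) : ((CI_2 F) * (BI F) : Rt F) = P1_3 F.
Proof. crunch2; rewrite ?CI_2E ?BIE ?P1_3E //=; ring. Qed.
Lemma lp2_3 (F : fieldType) : ((P1_3 F) * (C_2 F) : Rt F) = P2_3 F.
Proof. crunch2; rewrite ?P1_3E ?C_2E ?P2_3E //=; ring. Qed.
Lemma lp3_3 (F : fieldType) : ((P2_3 F) * (BR F) : Rt F) = C_3 F.
Proof. crunch2; rewrite ?P2_3E ?BRE ?C_3E //=; ring. Qed.
Lemma lq1_3 (F : fieldType) : ((BI F) * (CI_2 F) : Rt F) = Q1_3 F.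
Proof. crunch2; rewrite ?BIE ?CI_2E ?Q1_3E //=; ring. Qed.
Lemma lq2_3 (F : fieldType) : ((Q1_3 F) * (BR F) : Rt F) = Q2_3 F.
Proof. crunch2; rewrite ?Q1_3E ?BRE ?Q2_3E //=; ring. Qed.
Lemma lq3_3 (F : fieldType) : ((Q2_3 F) * (C_2 F) : Rt F) = CI_3 F.
Proof. crunch2; rewrite ?Q2_3E ?C_2E ?CI_3E //=; ring. Qed.
Lemma g3 (F : fieldType) : gcomm_iter (AR F) (AI F) (BR F) (BI F) 3 = (C_3 F, CI_3 F).
Proof.
rewrite (gstep (g2 F)).
by rewrite lp1_3 lp2_3 lp3_3 lq1_3 lq2_3 lq3_3.
Qed.
Definition P1_4c (F : fieldType) (k : nat) : F := match k with
  | 0 => 1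
  | 1 => (-1)
  | 2 => 1
  | 3 => (-1)
  | 4 => 1
  | 11 => (-1)
  | 12 => 3
  | 13 => (-3)
  | 14 => 1
  | 15 => 1
  | 16 => (-113)
  | 17 => 23
  | 18 => 260
  | 21 => (-3)
  | 22 => (-4)
  | 23 => (-16)
  | _ => 0 end.
Fact P1_4_key : unit. Proof. exact: tt. Qed.
Definition P1_4 (F : fieldType) : Rt F := locked_with P1_4_key (mkrow (fun k => P1_4c F k)).
Lemma P1_4E (F : fieldType) k : (k < 24)%N -> cc (P1_4 F) k = P1_4c F k.
Proof. by move=> hk; rewrite /P1_4 unlock ccE. Qed.
Definition P2_4c (F : fieldType) (k : nat) : F := match k with
  | 0 => 1
  | 1 => (-1)
  | 2 => 1
  | 3 => (-1)
  | 4 => 1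
  | 15 => 1
  | 16 => 11
  | 17 => 3
  | 18 => (-100)
  | 22 => 12
  | 23 => 4
  | _ => 0 end.
Fact P2_4_key : unit. Proof. exact: tt. Qed.
Definition P2_4 (F : fieldType) : Rt F := locked_with P2_4_key (mkrow (fun k => P2_4c F k)).
Lemma P2_4E (F : fieldType) k : (k < 24)%N -> cc (P2_4 F) k = P2_4c F k.
Proof. by move=> hk; rewrite /P2_4 unlock ccE. Qed.
Definition C_4c (F : fieldType) (k : nat) : F := match k with
  | 0 => 1
  | 15 => 1
  | 16 => 11
  | 17 => 3
  | 18 => (-80)
  | 22 => 12
  | 23 => 16
  | _ => 0 end.
Fact C_4_key : unit. Proof. exact: tt. Qed.
Definition C_4 (F : fieldType) : Rt F := locked_with C_4_key (mkrow (fun k => C_4c F k)).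
Lemma C_4E (F : fieldType) k : (k < 24)%N -> cc (C_4 F) k = C_4c F k.
Proof. by move=> hk; rewrite /C_4 unlock ccE. Qed.
Definition Q1_4c (F : fieldType) (k : nat) : F := match k with
  | 0 => 1
  | 1 => (-1)
  | 2 => 1
  | 3 => (-1)
  | 4 => 1
  | 11 => (-1)
  | 12 => 3
  | 13 => (-3)
  | 14 => 1
  | 16 => (-124)
  | 17 => 20
  | 18 => 360
  | 21 => (-3)
  | 22 => (-16)
  | 23 => (-20)
  | _ => 0 end.
Fact Q1_4_key : unit. Proof. exact: tt. Qed.
Definition Q1_4 (F : fieldType) : Rt F := locked_with Q1_4_key (mkrow (fun k => Q1_4c F k)).
Lemma Q1_4E (F : fieldType) k : (k < 24)%N -> cc (Q1_4 F) k = Q1_4c F k.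
Proof. by move=> hk; rewrite /Q1_4 unlock ccE. Qed.
Definition Q2_4c (F : fieldType) (k : nat) : F := match k with
  | 0 => 1
  | 11 => (-1)
  | 12 => 3
  | 13 => (-3)
  | 14 => 1
  | 15 => (-1)
  | 16 => (-104)
  | 17 => 12
  | 18 => 296
  | 21 => (-3)
  | 22 => (-28)
  | 23 => (-36)
  | _ => 0 end.
Fact Q2_4_key : unit. Proof. exact: tt. Qed.
Definition Q2_4 (F : fieldType) : Rt F := locked_with Q2_4_key (mkrow (fun k => Q2_4c F k)).
Lemma Q2_4E (F : fieldType) k : (k < 24)%N -> cc (Q2_4 F) k = Q2_4c F k.
Proof. by move=> hk; rewrite /Q2_4 unlock ccE. Qed.
Definition CI_4c (F : fieldType) (k : nat) : F := match k with
  | 0 => 1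
  | 15 => (-1)
  | 16 => (-11)
  | 17 => (-3)
  | 18 => 80
  | 22 => (-12)
  | 23 => (-16)
  | _ => 0 end.
Fact CI_4_key : unit. Proof. exact: tt. Qed.
Definition CI_4 (F : fieldType) : Rt F := locked_with CI_4_key (mkrow (fun k => CI_4c F k)).
Lemma CI_4E (F : fieldType) k : (k < 24)%N -> cc (CI_4 F) k = CI_4c F k.
Proof. by move=> hk; rewrite /CI_4 unlock ccE. Qed.
Lemma lp1_4 (F : fieldType) : ((CI_3 F) * (BI F) : Rt F) = P1_4 F.
Proof. crunch2; rewrite ?CI_3E ?BIE ?P1_4E //=; ring. Qed.
Lemma lp2_4 (F : fieldType) : ((P1_4 F) * (C_3 F) : Rt F) = P2_4 F.
Proof. crunch2; rewrite ?P1_4E ?C_3E ?P2_4E //=; ring. Qed.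
Lemma lp3_4 (F : fieldType) : ((P2_4 F) * (BR F) : Rt F) = C_4 F.
Proof. crunch2; rewrite ?P2_4E ?BRE ?C_4E //=; ring. Qed.
Lemma lq1_4 (F : fieldType) : ((BI F) * (CI_3 F) : Rt F) = Q1_4 F.
Proof. crunch2; rewrite ?BIE ?CI_3E ?Q1_4E //=; ring. Qed.
Lemma lq2_4 (F : fieldType) : ((Q1_4 F) * (BR F) : Rt F) = Q2_4 F.
Proof. crunch2; rewrite ?Q1_4E ?BRE ?Q2_4E //=; ring. Qed.
Lemma lq3_4 (F : fieldType) : ((Q2_4 F) * (C_3 F) : Rt F) = CI_4 F.
Proof. crunch2; rewrite ?Q2_4E ?C_3E ?CI_4E //=; ring. Qed.
Lemma g4 (F : fieldType) : gcomm_iter (AR F) (AI F) (BR F) (BI F) 4 = (C_4 F, CI_4 F).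
Proof.
rewrite (gstep (g3 F)).
by rewrite lp1_4 lp2_4 lp3_4 lq1_4 lq2_4 lq3_4.
Qed.
Definition P1_5c (F : fieldType) (k : nat) : F := match k with
  | 0 => 1
  | 1 => (-1)
  | 2 => 1
  | 3 => (-1)
  | 4 => 1
  | 15 => (-1)
  | 16 => (-11)
  | 17 => (-3)
  | 18 => 100
  | 22 => (-12)
  | 23 => (-4)
  | _ => 0 end.
Fact P1_5_key : unit. Proof. exact: tt. Qed.
Definition P1_5 (F : fieldType) : Rt F := locked_with P1_5_key (mkrow (fun k => P1_5c F k)).
Lemma P1_5E (F : fieldType) k : (k < 24)%N -> cc (P1_5 F) k = P1_5c F k.
Proof. by move=> hk; rewrite /P1_5 unlock ccE. Qed.
Definition P2_5c (F : fieldType) (k : nat) : F := match k with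
  | 0 => 1
  | 1 => (-1)
  | 2 => 1
  | 3 => (-1)
  | 4 => 1
  | 23 => 12
  | _ => 0 end.
Fact P2_5_key : unit. Proof. exact: tt. Qed.
Definition P2_5 (F : fieldType) : Rt F := locked_with P2_5_key (mkrow (fun k => P2_5c F k)).
Lemma P2_5E (F : fieldType) k : (k < 24)%N -> cc (P2_5 F) k = P2_5c F k.
Proof. by move=> hk; rewrite /P2_5 unlock ccE. Qed.
Definition C_5c (F : fieldType) (k : nat) : F := match k with
  | 0 => 1
  | 23 => 12
  | _ => 0 end.
Fact C_5_key : unit. Proof. exact: tt. Qed.
Definition C_5 (F : fieldType) : Rt F := locked_with C_5_key (mkrow (fun k => C_5c F k)).
Lemma C_5E (F : fieldType) k : (k < 24)%N -> cc (C_5 F) k = C_5c F k.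
Proof. by move=> hk; rewrite /C_5 unlock ccE. Qed.
Definition Q1_5c (F : fieldType) (k : nat) : F := match k with
  | 0 => 1
  | 1 => (-1)
  | 2 => 1
  | 3 => (-1)
  | 4 => 1
  | 15 => (-1)
  | 16 => (-11)
  | 17 => (-3)
  | 18 => 100
  | 22 => (-12)
  | 23 => (-16)
  | _ => 0 end.
Fact Q1_5_key : unit. Proof. exact: tt. Qed.
Definition Q1_5 (F : fieldType) : Rt F := locked_with Q1_5_key (mkrow (fun k => Q1_5c F k)).
Lemma Q1_5E (F : fieldType) k : (k < 24)%N -> cc (Q1_5 F) k = Q1_5c F k.
Proof. by move=> hk; rewrite /Q1_5 unlock ccE. Qed.
Definition Q2_5c (F : fieldType) (k : nat) : F := match k with
  | 0 => 1
  | 15 => (-1)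
  | 16 => (-11)
  | 17 => (-3)
  | 18 => 80
  | 22 => (-12)
  | 23 => (-28)
  | _ => 0 end.
Fact Q2_5_key : unit. Proof. exact: tt. Qed.
Definition Q2_5 (F : fieldType) : Rt F := locked_with Q2_5_key (mkrow (fun k => Q2_5c F k)).
Lemma Q2_5E (F : fieldType) k : (k < 24)%N -> cc (Q2_5 F) k = Q2_5c F k.
Proof. by move=> hk; rewrite /Q2_5 unlock ccE. Qed.
Definition CI_5c (F : fieldType) (k : nat) : F := match k with
  | 0 => 1
  | 23 => (-12)
  | _ => 0 end.
Fact CI_5_key : unit. Proof. exact: tt. Qed.
Definition CI_5 (F : fieldType) : Rt F := locked_with CI_5_key (mkrow (fun k => CI_5c F k)).
Lemma CI_5E (F : fieldType) k : (k < 24)%N -> cc (CI_5 F) k = CI_5c F k.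
Proof. by move=> hk; rewrite /CI_5 unlock ccE. Qed.
Lemma lp1_5 (F : fieldType) : ((CI_4 F) * (BI F) : Rt F) = P1_5 F.
Proof. crunch2; rewrite ?CI_4E ?BIE ?P1_5E //=; ring. Qed.
Lemma lp2_5 (F : fieldType) : ((P1_5 F) * (C_4 F) : Rt F) = P2_5 F.
Proof. crunch2; rewrite ?P1_5E ?C_4E ?P2_5E //=; ring. Qed.
Lemma lp3_5 (F : fieldType) : ((P2_5 F) * (BR F) : Rt F) = C_5 F.
Proof. crunch2; rewrite ?P2_5E ?BRE ?C_5E //=; ring. Qed.
Lemma lq1_5 (F : fieldType) : ((BI F) * (CI_4 F) : Rt F) = Q1_5 F.
Proof. crunch2; rewrite ?BIE ?CI_4E ?Q1_5E //=; ring. Qed.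
Lemma lq2_5 (F : fieldType) : ((Q1_5 F) * (BR F) : Rt F) = Q2_5 F.
Proof. crunch2; rewrite ?Q1_5E ?BRE ?Q2_5E //=; ring. Qed.
Lemma lq3_5 (F : fieldType) : ((Q2_5 F) * (C_4 F) : Rt F) = CI_5 F.
Proof. crunch2; rewrite ?Q2_5E ?C_4E ?CI_5E //=; ring. Qed.
Lemma g5 (F : fieldType) : gcomm_iter (AR F) (AI F) (BR F) (BI F) 5 = (C_5 F, CI_5 F).
Proof.
rewrite (gstep (g4 F)).
by rewrite lp1_5 lp2_5 lp3_5 lq1_5 lq2_5 lq3_5.
Qed.

Lemma nz2 (F : fieldType) (h2 : 2%N \notin [pchar F]) : (2 : F) != 0.
Proof. apply/eqP=> h; move: h2; rewrite inE /= h eqxx. by []. Qed.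
Lemma nz3 (F : fieldType) (h3 : 3%N \notin [pchar F]) : (3 : F) != 0.
Proof. apply/eqP=> h; move: h3; rewrite inE /= h eqxx. by []. Qed.
Lemma nz4 (F : fieldType) (h2 : 2%N \notin [pchar F]) : (4 : F) != 0.
Proof. have -> : (4 : F) = 2 * 2 by ring. by rewrite !mulf_neq0 // ?nz2. Qed.
Lemma nz12 (F : fieldType) (h2 : 2%N \notin [pchar F]) (h3 : 3%N \notin [pchar F]) : (12 : F) != 0.
Proof. have -> : (12 : F) = 2 * 2 * 3 by ring. by rewrite !mulf_neq0 // ?nz2 ?nz3. Qed.

Lemma not_units_engel (F : fieldType) (h2 : 2%N \notin [pchar F]) (h3 : 3%N \notin [pchar F]) :
  ~ units_engel (Rt F) 5.
Proof.
move=> H.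
have hA : is_inverse_pair (AR F) (AI F) by rewrite /is_inverse_pair -oneE AAI AIA.
have hB : is_inverse_pair (BR F) (BI F) by rewrite /is_inverse_pair -oneE BBI BIB.
have := H (AR F) (AI F) (BR F) (BI F) hA hB.
rewrite g5 /= => /(congr1 (fun M => cc M 23)).
rewrite cc1 // C_5E //= => /eqP.
by rewrite (negbTE (nz12 h2 h3)).
Qed.

Definition EB (F : fieldType) (k : nat) : Rt F := mkrow (fun j => if j == k then 1 else 0).
Lemma eb1 (F : fieldType) : (EB F 0 * EB F 1 : Rt F) = EB F 1.
Proof. crunch2; rewrite /EB ?ccE //=; ring. Qed.
Lemma eb2 (F : fieldType) : (EB F 1 * EB F 1 : Rt F) = EB F 2.
Proof. crunch2; rewrite /EB ?ccE //=; ring. Qed.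
Lemma eb3 (F : fieldType) : (EB F 2 * EB F 1 : Rt F) = EB F 3.
Proof. crunch2; rewrite /EB ?ccE //=; ring. Qed.
Lemma eb4 (F : fieldType) : (EB F 3 * EB F 1 : Rt F) = EB F 4.
Proof. crunch2; rewrite /EB ?ccE //=; ring. Qed.
Lemma eb5 (F : fieldType) : (EB F 0 * EB F 5 : Rt F) = EB F 5.
Proof. crunch2; rewrite /EB ?ccE //=; ring. Qed.
Lemma eb6 (F : fieldType) : (EB F 5 * EB F 1 : Rt F) = EB F 6.
Proof. crunch2; rewrite /EB ?ccE //=; ring. Qed.
Lemma eb7 (F : fieldType) : (EB F 1 * EB F 5 : Rt F) = EB F 7.
Proof. crunch2; rewrite /EB ?ccE //=; ring. Qed.
Lemma eb8 (F : fieldType) : (EB F 6 * EB F 1 : Rt F) = EB F 8.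
Proof. crunch2; rewrite /EB ?ccE //=; ring. Qed.
Lemma eb9 (F : fieldType) : (EB F 7 * EB F 1 : Rt F) = EB F 9.
Proof. crunch2; rewrite /EB ?ccE //=; ring. Qed.
Lemma eb10 (F : fieldType) : (EB F 2 * EB F 5 : Rt F) = EB F 10.
Proof. crunch2; rewrite /EB ?ccE //=; ring. Qed.
Lemma eb11 (F : fieldType) : (EB F 8 * EB F 1 : Rt F) = EB F 11.
Proof. crunch2; rewrite /EB ?ccE //=; ring. Qed.
Lemma eb12 (F : fieldType) : (EB F 9 * EB F 1 : Rt F) = EB F 12.
Proof. crunch2; rewrite /EB ?ccE //=; ring. Qed.
Lemma eb13 (F : fieldType) : (EB F 10 * EB F 1 : Rt F) = EB F 13.
Proof. crunch2; rewrite /EB ?ccE //=; ring. Qed.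
Lemma eb14 (F : fieldType) : (EB F 3 * EB F 5 : Rt F) = EB F 14.
Proof. crunch2; rewrite /EB ?ccE //=; ring. Qed.
Lemma eb15 (F : fieldType) : (EB F 11 * EB F 1 : Rt F) = EB F 15.
Proof. crunch2; rewrite /EB ?ccE //=; ring. Qed.
Lemma eb16 (F : fieldType) : (EB F 12 * EB F 1 : Rt F) = 12 *: EB F 16.
Proof. crunch2; rewrite /EB ?ccE //=; ring. Qed.
Lemma eb17 (F : fieldType) : (EB F 13 * EB F 1 : Rt F) = 4 *: EB F 17.
Proof. crunch2; rewrite /EB ?ccE //=; ring. Qed.
Lemma eb18 (F : fieldType) : (EB F 16 * EB F 1 : Rt F) = EB F 18.
Proof. crunch2; rewrite /EB ?ccE //=; ring. Qed.
Lemma eb19 (F : fieldType) : (EB F 6 * EB F 5 : Rt F) = EB F 19.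
Proof. crunch2; rewrite /EB ?ccE //=; ring. Qed.
Lemma eb20 (F : fieldType) : (EB F 19 * EB F 1 : Rt F) = EB F 20.
Proof. crunch2; rewrite /EB ?ccE //=; ring. Qed.
Lemma eb21 (F : fieldType) : (EB F 20 * EB F 1 : Rt F) = 3 *: EB F 21.
Proof. crunch2; rewrite /EB ?ccE //=; ring. Qed.
Lemma eb22 (F : fieldType) : (EB F 21 * EB F 1 : Rt F) = 4 *: EB F 22.
Proof. crunch2; rewrite /EB ?ccE //=; ring. Qed.
Lemma eb23 (F : fieldType) : (EB F 22 * EB F 1 : Rt F) = EB F 23.
Proof. crunch2; rewrite /EB ?ccE //=; ring. Qed.
Lemma eb0 (F : fieldType) : EB F 0 = 1.
Proof. crunch2; rewrite /EB cc1 ?ccE //=. Qed.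
Lemma xx0 (F : fieldType) : (EB F 5 * EB F 5 : Rt F) = 0.
Proof. crunch2; rewrite /EB ?ccE //=; ring. Qed.
Lemma y50 (F : fieldType) : (EB F 4 * EB F 1 : Rt F) = 0.
Proof. crunch2; rewrite /EB ?ccE //=; ring. Qed.
Lemma decomp (F : fieldType) (r : Rt F) : r = cc r 0 *: EB F 0 + cc r 1 *: EB F 1 + cc r 2 *: EB F 2 + cc r 3 *: EB F 3 + cc r 4 *: EB F 4 + cc r 5 *: EB F 5 + cc r 6 *: EB F 6 + cc r 7 *: EB F 7 + cc r 8 *: EB F 8 + cc r 9 *: EB F 9 + cc r 10 *: EB F 10 + cc r 11 *: EB F 11 + cc r 12 *: EB F 12 + cc r 13 *: EB F 13 + cc r 14 *: EB F 14 + cc r 15 *: EB F 15 + cc r 16 *: EB F 16 + cc r 17 *: EB F 17 + cc r 18 *: EB F 18 + cc r 19 *: EB F 19 + cc r 20 *: EB F 20 + cc r 21 *: EB F 21 + cc r 22 *: EB F 22 + cc r 23 *: EB F 23.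
Proof. crunch2; rewrite /EB ?ccE //=; ring. Qed.
Lemma gen2 (F : fieldType) (h2 : 2%N \notin [pchar F]) (h3 : 3%N \notin [pchar F]) :
  gen_by_2_nilpotents (Rt F).
Proof.
exists (EB F 5), (EB F 1); split; [|split].
- by exists 2%N; rewrite expr2 xx0.
- exists 5%N; rewrite !exprSr expr0 mul1r.
  by rewrite (eb2 F) (eb3 F) (eb4 F) y50.
move=> r S H1 Hx Hy HD HZ HM.
have E0 : S (EB F 0) by rewrite eb0.
have E1 : S (EB F 1) by rewrite -eb1; apply: HM.
have E2 : S (EB F 2) by rewrite -eb2; apply: HM.
have E3 : S (EB F 3) by rewrite -eb3; apply: HM.
have E4 : S (EB F 4) by rewrite -eb4; apply: HM.
have E5 : S (EB F 5) by rewrite -eb5; apply: HM.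
have E6 : S (EB F 6) by rewrite -eb6; apply: HM.
have E7 : S (EB F 7) by rewrite -eb7; apply: HM.
have E8 : S (EB F 8) by rewrite -eb8; apply: HM.
have E9 : S (EB F 9) by rewrite -eb9; apply: HM.
have E10 : S (EB F 10) by rewrite -eb10; apply: HM.
have E11 : S (EB F 11) by rewrite -eb11; apply: HM.
have E12 : S (EB F 12) by rewrite -eb12; apply: HM.
have E13 : S (EB F 13) by rewrite -eb13; apply: HM.
have E14 : S (EB F 14) by rewrite -eb14; apply: HM.
have E15 : S (EB F 15) by rewrite -eb15; apply: HM.
have E16 : S (EB F 16).
  have := HZ ((12 : F)^-1) _ (HM _ _ E12 Hy).
  by rewrite eb16 scalerA mulVf ?scale1r //; apply: (nz12 h2 h3).
have E17 : S (EB F 17).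
  have := HZ ((4 : F)^-1) _ (HM _ _ E13 Hy).
  by rewrite eb17 scalerA mulVf ?scale1r //; apply: (nz4 h2).
have E18 : S (EB F 18) by rewrite -eb18; apply: HM.
have E19 : S (EB F 19) by rewrite -eb19; apply: HM.
have E20 : S (EB F 20) by rewrite -eb20; apply: HM.
have E21 : S (EB F 21).
  have := HZ ((3 : F)^-1) _ (HM _ _ E20 Hy).
  by rewrite eb21 scalerA mulVf ?scale1r //; apply: (nz3 h3).
have E22 : S (EB F 22).
  have := HZ ((4 : F)^-1) _ (HM _ _ E21 Hy).
  by rewrite eb22 scalerA mulVf ?scale1r //; apply: (nz4 h2).
have E23 : S (EB F 23) by rewrite -eb23; apply: HM.
rewrite (decomp r).
do 23 (apply HD; last by apply HZ).
by apply HZ.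
Qed.

Theorem theorem1p1 (F : fieldType) (h2 : 2%N \notin [pchar F]) (h3 : 3%N \notin [pchar F]) :
  exists R : algType F,
    lie_engel R 5 /\ ~ units_engel R 5 /\ gen_by_2_nilpotents R.
Proof.
exists (Rt F); split; [exact: engel | split; [exact: not_units_engel | exact: gen2]].
Qed.
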